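(* For all integers $n\ge4$ and $1\le f\le n$, $\mathcal{C}(n,f)\neq\emptyset$; that is, there exists a transitive circle exchange transformation of $n$ subintervals with exactly $f$ flips.
   Context: Let $S^1=[0,1]/(0\sim1)$ with orientation induced by $[0,1]$. An $n$-CET is an injective map $T:\bigcup_{i=1}^n I_i\to S^1$, where $I_1,\dots,I_n$ are pairwise disjoint open subintervals of $S^1$ whose closures cover $S^1$, which is an isometry on each $I_i$ and cannot be continuously extended to a larger open subset of $S^1$. A flip is an $I_i$ on which $T$ reverses orientation. $T$ is transitive if some orbit $\{T^m(p): m\in\mathbb{Z},\ p\in\mathrm{Dom}(T^m)\}$ is dense in $S^1$. $\mathcal{C}(n,f)$ is the set of transitive $n$-CETs with exactly $f$ flips. *)

(* Defs.v *)
From Stdlib Require Import Reals List.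
Open Scope R_scope.

(* The circle S^1 = [0,1]/(0~1) is represented by the reals x with 0 <= x < 1;
   the orientation is the one induced by [0,1] (increasing x). *)
Definition in_circle (x : R) : Prop := 0 <= x < 1.

Definition md1 (r : R) : R := frac_part r.

Definition cdist (x y : R) : R := Rmin (md1 (x - y)) (md1 (y - x)).

Definition arc (a l : R) (x : R) : Prop :=
  in_circle x /\ 0 < md1 (x - a) < l.

Definition is_open_subinterval (J : R -> Prop) : Prop :=
  exists a l, in_circle a /\ 0 < l <= 1 /\ forall x, J x <-> arc a l x.

Definition closure_circ (J : R -> Prop) (x : R) : Prop :=
  in_circle x /\ forall eps, 0 < eps -> exists y, J y /\ cdist x y < eps.

Definition open_circ (U : R -> Prop) : Prop :=
  (forall x, U x -> in_circle x) /\
  forall x, U x -> exists eps, 0 < eps /\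
    forall y, in_circle y -> cdist x y < eps -> U y.

Definition continuous_on_circ (U : R -> Prop) (g : R -> R) : Prop :=
  forall x eps, U x -> 0 < eps -> exists delta, 0 < delta /\
    forall y, U y -> cdist x y < delta -> cdist (g x) (g y) < eps.

Definition isometry_on (J : R -> Prop) (T : R -> R) : Prop :=
  forall x y, J x -> J y -> cdist (T x) (T y) = cdist x y.

Definition reverses_orientation (J : R -> Prop) (T : R -> R) : Prop :=
  forall x y, J x -> J y -> md1 (T y - T x) = md1 (x - y).

Definition dom (n : nat) (I : nat -> R -> Prop) (x : R) : Prop :=
  exists i, (i < n)%nat /\ I i x.

Definition not_extendable (D : R -> Prop) (T : R -> R) : Prop :=
  ~ exists (U : R -> Prop) (g : R -> R),
      open_circ U /\ (forall x, D x -> U x) /\ (exists x, U x /\ ~ D x) /\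
      (forall x, U x -> in_circle (g x)) /\ (forall x, D x -> g x = T x) /\
      continuous_on_circ U g.

Definition is_CET (n : nat) (I : nat -> R -> Prop) (T : R -> R) : Prop :=
  (forall i, (i < n)%nat -> is_open_subinterval (I i)) /\
  (forall i j x, (i < n)%nat -> (j < n)%nat -> i <> j -> I i x -> I j x -> False) /\
  (forall x, in_circle x -> exists i, (i < n)%nat /\ closure_circ (I i) x) /\
  (forall x, dom n I x -> in_circle (T x)) /\
  (forall x y, dom n I x -> dom n I y -> T x = T y -> x = y) /\
  (forall i, (i < n)%nat -> isometry_on (I i) T) /\
  not_extendable (dom n I) T.

(* q = T^m(p) with p in Dom(T^m), for m >= 0 (forward) and m <= 0 (backward) *)
Fixpoint fwd (D : R -> Prop) (T : R -> R) (m : nat) (p q : R) : Prop :=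
  match m with
  | O => q = p
  | S k => exists r, fwd D T k p r /\ D r /\ q = T r
  end.

Fixpoint bwd (D : R -> Prop) (T : R -> R) (m : nat) (p q : R) : Prop :=
  match m with
  | O => q = p
  | S k => exists r, bwd D T k p r /\ D q /\ T q = r
  end.

Definition orbit (D : R -> Prop) (T : R -> R) (p q : R) : Prop :=
  exists m, fwd D T m p q \/ bwd D T m p q.

Definition transitive (D : R -> Prop) (T : R -> R) : Prop :=
  exists p, in_circle p /\
    forall y eps, in_circle y -> 0 < eps ->
      exists q, orbit D T p q /\ cdist q y < eps.

Definition exactly_flips (n : nat) (I : nat -> R -> Prop) (T : R -> R) (f : nat) : Prop :=
  exists S : list nat, NoDup S /\ length S = f /\
    forall i, In i S <-> ((i < n)%nat /\ reverses_orientation (I i) T).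

Definition in_C (n f : nat) (T : R -> R) : Prop :=
  exists I : nat -> R -> Prop,
    is_CET n I T /\ transitive (dom n I) T /\ exactly_flips n I T f.

(* Main.v *)
Require Import Defs.
From Stdlib Require Import Reals List Lra Lia ZArith Classical Permutation.
Import ListNotations.
Open Scope R_scope.


Lemma md1_spec : forall r (z : Z), IZR z <= r < IZR z + 1 -> md1 r = r - IZR z.
Proof.
  intros r z H. unfold md1, frac_part.
  rewrite <- (Int_part_spec r z); [reflexivity|lra].
Qed.

Lemma md1_id : forall r, 0 <= r < 1 -> md1 r = r.
Proof. intros r H. rewrite (md1_spec r 0); simpl; lra. Qed.

Lemma md1_neg : forall r, -1 <= r < 0 -> md1 r = r + 1.
Proof. intros r H. rewrite (md1_spec r (-1)); simpl; [lra|]. simpl; lra. Qed.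

Lemma md1_range : forall r, 0 <= md1 r < 1.
Proof. intros r. unfold md1. destruct (base_fp r). lra. Qed.

Lemma md1_int : forall r, exists z : Z, md1 r = r - IZR z.
Proof. intros r. exists (Int_part r). reflexivity. Qed.

Lemma cdist_achieved : forall u v, exists k : Z, Rabs (u - v - IZR k) = cdist u v.
Proof.
  intros u v. unfold cdist.
  destruct (md1_int (u - v)) as [z1 H1]. destruct (md1_int (v - u)) as [z2 H2].
  pose proof (md1_range (u-v)). pose proof (md1_range (v-u)).
  unfold Rmin. destruct (Rle_dec (md1 (u - v)) (md1 (v - u))).
  - exists z1. rewrite H1 in *. rewrite Rabs_right; lra.
  - exists (- z2)%Z. rewrite opp_IZR. rewrite H2 in *.
    rewrite Rabs_left1; lra.
Qed.

Lemma md1_opp_le : forall r, md1 (- r) <= 1 - md1 r.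
Proof.
  intros r. destruct (md1_int r) as [z Hz].
  pose proof (md1_range r).
  destruct (Req_dec (md1 r) 0) as [E|E].
  - pose proof (md1_range (-r)). lra.
  - rewrite (md1_spec (-r) (- z - 1)); rewrite ?minus_IZR, ?opp_IZR; simpl; lra.
Qed.

Lemma cdist_min : forall u v (k : Z), cdist u v <= Rabs (u - v - IZR k).
Proof.
  intros u v k. unfold cdist.
  destruct (md1_int (u - v)) as [z Hz].
  pose proof (md1_range (u-v)). pose proof (md1_opp_le (u - v)).
  replace (v - u) with (- (u - v)) by ring.
  destruct (Z_le_gt_dec k z) as [Hk|Hk].
  - apply IZR_le in Hk. eapply Rle_trans; [apply Rmin_l|].
    rewrite Rabs_right; lra.
  - assert (IZR k >= IZR z + 1).
    { rewrite <- plus_IZR. apply Rle_ge, IZR_le. lia. }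
    eapply Rle_trans; [apply Rmin_r|]. rewrite Rabs_left1; lra.
Qed.

Lemma cdist_triangle : forall x y z, cdist x z <= cdist x y + cdist y z.
Proof.
  intros x y z.
  destruct (cdist_achieved x y) as [k1 H1]. destruct (cdist_achieved y z) as [k2 H2].
  eapply Rle_trans; [apply (cdist_min x z (k1 + k2))|].
  rewrite plus_IZR, <- H1, <- H2.
  replace (x - z - (IZR k1 + IZR k2)) with ((x - y - IZR k1) + (y - z - IZR k2)) by ring.
  apply Rabs_triang.
Qed.

Lemma cdist_sym : forall x y, cdist x y = cdist y x.
Proof. intros. unfold cdist. apply Rmin_comm. Qed.

Lemma cdist_nonneg : forall x y, 0 <= cdist x y.
Proof.
  intros. unfold cdist. pose proof (md1_range (x-y)). pose proof (md1_range (y-x)).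
  unfold Rmin; destruct Rle_dec; lra.
Qed.

Lemma cdist_le_abs : forall x y, cdist x y <= Rabs (x - y).
Proof. intros. pose proof (cdist_min x y 0). simpl in H. rewrite Rminus_0_r in H. exact H. Qed.

Lemma cdist_same_diff : forall x y u v, x - y = u - v -> cdist x y = cdist u v.
Proof.
  intros. unfold cdist. rewrite H. replace (y - x) with (v - u) by lra. reflexivity.
Qed.

Lemma cdist_opp_diff : forall x y u v, x - y = v - u -> cdist x y = cdist u v.
Proof.
  intros. unfold cdist. rewrite H. replace (y - x) with (u - v) by lra. apply Rmin_comm.
Qed.

Lemma cdist_pos : forall u v, 0 <= u <= 1 -> 0 <= v <= 1 ->
  u <> v -> u - v <> 1 -> v - u <> 1 -> 0 < cdist u v.
Proof.
  intros u v Hu Hv H1 H2 H3.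
  destruct (Rle_lt_or_eq_dec _ _ (cdist_nonneg u v)) as [|E]; [assumption|exfalso].
  unfold cdist, Rmin in E. destruct Rle_dec.
  - destruct (Rle_lt_dec 0 (u - v)).
    + destruct (Req_dec (u - v) 1). contradiction.
      rewrite md1_id in E; lra.
    + rewrite md1_neg in E; lra.
  - destruct (Rle_lt_dec 0 (v - u)).
    + destruct (Req_dec (v - u) 1). contradiction.
      rewrite md1_id in E; lra.
    + rewrite md1_neg in E; lra.
Qed.

Lemma arc_iff : forall a l x, 0 <= a -> a + l <= 1 -> 0 < l -> in_circle x ->
  (arc a l x <-> a < x < a + l).
Proof.
  intros a l x Ha Hal Hl Hx. unfold arc, in_circle in *. split.
  - intros [_ H]. destruct (Rle_lt_dec a x).
    + rewrite md1_id in H; lra.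
    + rewrite md1_neg in H; lra.
  - intros H. split; [assumption|]. rewrite md1_id; lra.
Qed.

Record PD := mkPD { pn : nat; pa : nat -> R; pl : nat -> R; pd : nat -> R; pf : nat -> bool }.

Definition pform (D : PD) (i : nat) (u : R) : R :=
  if pf D i then pa D i + pl D i + pd D i - u else u - pa D i + pd D i.

Fixpoint Tp_aux (D : PD) (k : nat) (u : R) : R :=
  match k with
  | O => 0
  | S k' => if Rlt_dec (pa D k') u then
              if Rlt_dec u (pa D k' + pl D k') then pform D k' u else Tp_aux D k' u
            else Tp_aux D k' u
  end.

Definition Tp (D : PD) (u : R) : R := Tp_aux D (pn D) u.

Definition endv (D : PD) (j : nat) : R := if pf D j then pd D j else pd D j + pl D j.
Definition startv (D : PD) (i : nat) : R := if pf D i then pd D i + pl D i else pd D i.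
Definition prevp (D : PD) (i : nat) : nat := match i with O => pred (pn D) | S k => k end.
Definition distinct01 (u v : R) : Prop := u <> v /\ u - v <> 1 /\ v - u <> 1.

Definition PD_ok (D : PD) : Prop :=
  (1 <= pn D)%nat /\
  pa D 0 = 0 /\
  (forall i, (S i < pn D)%nat -> pa D (S i) = pa D i + pl D i) /\
  pa D (pred (pn D)) + pl D (pred (pn D)) = 1 /\
  (forall i, (i < pn D)%nat -> 0 < pl D i) /\
  (forall i, (i < pn D)%nat -> 0 <= pd D i /\ pd D i + pl D i <= 1) /\
  (forall i j, (i < pn D)%nat -> (j < pn D)%nat -> i <> j ->
      pd D i + pl D i <= pd D j \/ pd D j + pl D j <= pd D i) /\
  (forall i, (i < pn D)%nat -> distinct01 (endv D (prevp D i)) (startv D i)).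

Definition pI (D : PD) (i : nat) : R -> Prop := arc (pa D i) (pl D i).


Lemma pa_mono : forall D, PD_ok D -> forall i j, (i < j)%nat -> (j < pn D)%nat ->
  pa D i + pl D i <= pa D j.
Proof.
  intros D HD i j Hij Hj. destruct HD as (_&_&Hc&_&Hl&_).
  induction j as [|j IH]; [lia|].
  rewrite Hc by lia. destruct (Nat.eq_dec i j) as [->|Hne]; [lra|].
  assert (pa D i + pl D i <= pa D j) by (apply IH; lia).
  pose proof (Hl j ltac:(lia)). lra.
Qed.

Lemma pa_bounds : forall D, PD_ok D -> forall i, (i < pn D)%nat ->
  0 <= pa D i /\ pa D i + pl D i <= 1.
Proof.
  intros D HD i Hi. pose proof HD as (H1&H0&Hc&He&Hl&_).
  split.
  - destruct i. lra. pose proof (pa_mono D HD 0 (S i) ltac:(lia) Hi).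
    pose proof (Hl 0%nat ltac:(lia)). lra.
  - destruct (Nat.eq_dec i (pred (pn D))) as [->|Hne]. lra.
    pose proof (pa_mono D HD i (pred (pn D)) ltac:(lia) ltac:(lia)).
    pose proof (Hl (pred (pn D)) ltac:(lia)). lra.
Qed.

Lemma pieces_disj : forall D, PD_ok D -> forall i j u, (i < pn D)%nat -> (j < pn D)%nat ->
  pa D i < u < pa D i + pl D i -> pa D j < u < pa D j + pl D j -> i = j.
Proof.
  intros D HD i j u Hi Hj H1 H2.
  destruct (Nat.lt_total i j) as [Hlt|[E|Hlt]]; [|exact E|].
  - pose proof (pa_mono D HD i j Hlt Hj). lra.
  - pose proof (pa_mono D HD j i Hlt Hi). lra.
Qed.

Lemma Tp_aux_eq : forall D, PD_ok D -> forall k i u, (k <= pn D)%nat -> (i < k)%nat ->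
  pa D i < u < pa D i + pl D i -> Tp_aux D k u = pform D i u.
Proof.
  intros D HD k. induction k as [|k IH]; intros i u Hk Hi Hu; [lia|].
  simpl. destruct (Rlt_dec (pa D k) u); [destruct (Rlt_dec u (pa D k + pl D k))|].
  - replace k with i; [reflexivity|]. symmetry. apply (pieces_disj D HD k i u); try lia; lra.
  - apply IH; [lia| |exact Hu]. destruct (Nat.eq_dec i k) as [->|]; [lra|lia].
  - apply IH; [lia| |exact Hu]. destruct (Nat.eq_dec i k) as [->|]; [lra|lia].
Qed.

Lemma Tp_eq : forall D, PD_ok D -> forall i u, (i < pn D)%nat ->
  pa D i < u < pa D i + pl D i -> Tp D u = pform D i u.
Proof. intros. unfold Tp. apply Tp_aux_eq; auto. Qed.

Lemma pform_range : forall D, PD_ok D -> forall i u, (i < pn D)%nat ->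
  pa D i < u < pa D i + pl D i -> pd D i < pform D i u < pd D i + pl D i.
Proof.
  intros. unfold pform. destruct (pf D i); lra.
Qed.

Lemma pI_iff : forall D, PD_ok D -> forall i x, (i < pn D)%nat -> in_circle x ->
  (pI D i x <-> pa D i < x < pa D i + pl D i).
Proof.
  intros D HD i x Hi Hx. pose proof (pa_bounds D HD i Hi).
  destruct HD as (_&_&_&_&Hl&_). apply arc_iff; [lra|lra|apply Hl; auto|exact Hx].
Qed.

Lemma pI_circ : forall D i x, pI D i x -> in_circle x.
Proof. intros D i x [H _]. exact H. Qed.

Lemma dom_piece : forall D, PD_ok D -> forall x, dom (pn D) (pI D) x ->
  exists i, (i < pn D)%nat /\ pa D i < x < pa D i + pl D i.
Proof.
  intros D HD x [i [Hi Hx]]. exists i. split; auto.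
  apply (pI_iff D HD i x Hi (pI_circ D i x Hx)). exact Hx.
Qed.

Lemma cover_closed : forall D, PD_ok D -> forall x, 0 <= x < 1 ->
  exists i, (i < pn D)%nat /\ pa D i <= x <= pa D i + pl D i.
Proof.
  intros D HD x Hx. pose proof HD as (H1&H0&Hc&He&Hl&_).
  assert (forall k, (k < pn D)%nat -> x <= pa D k + pl D k ->
            exists i, (i <= k)%nat /\ pa D i <= x <= pa D i + pl D i).
  { induction k as [|k IH]; intros Hk Hxk.
    - exists 0%nat. split; [lia|]. lra.
    - destruct (Rle_lt_dec x (pa D k + pl D k)).
      + destruct (IH ltac:(lia) r) as [i [? ?]]. exists i. split; [lia|auto].
      + exists (S k). split; [lia|]. rewrite Hc in * by lia. lra. }
  destruct (H (pred (pn D)) ltac:(lia) ltac:(lra)) as [i [? ?]].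
  exists i. split; [lia|auto].
Qed.

Lemma pform_diff : forall D i x y, pform D i x - pform D i y = if pf D i then y - x else x - y.
Proof. intros. unfold pform. destruct (pf D i); ring. Qed.

Lemma PD_isCET : forall D, PD_ok D -> is_CET (pn D) (pI D) (Tp D).
Proof.
  intros D HD. pose proof HD as (H1&H0&Hc&He&Hl&Hd&Hdisj&Hjump).
  split; [|split; [|split; [|split; [|split; [|split]]]]].
  - intros i Hi. exists (pa D i), (pl D i). pose proof (pa_bounds D HD i Hi).
    pose proof (Hl i Hi). unfold in_circle. split; [lra|]. split; [lra|]. intros; tauto.
  - intros i j x Hi Hj Hne Hx Hy. apply Hne.
    pose proof (pI_circ D i x Hx) as Cx.
    apply (pieces_disj D HD i j x Hi Hj); [apply (pI_iff D HD i x Hi Cx)|apply (pI_iff D HD j x Hj Cx)]; auto.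
  - intros x Hx. destruct (cover_closed D HD x Hx) as [i [Hi Hxi]].
    exists i. split; auto. split; auto. intros eps Heps.
    pose proof (Hl i Hi). pose proof (pa_bounds D HD i Hi).
    set (h := Rmin (eps/2) (pl D i / 4)).
    assert (0 < h) by (unfold h; apply Rmin_glb_lt; lra).
    assert (h <= eps/2) by apply Rmin_l. assert (h <= pl D i / 4) by apply Rmin_r.
    destruct (Rlt_le_dec x (pa D i + pl D i / 2)).
    + exists (x + h). split.
      * apply (pI_iff D HD i); auto; unfold in_circle in *; split; lra.
      * eapply Rle_lt_trans; [apply cdist_le_abs|]. rewrite Rabs_left1; lra.
    + exists (x - h). split.
      * apply (pI_iff D HD i); auto; unfold in_circle in *; split; lra.
      * eapply Rle_lt_trans; [apply cdist_le_abs|]. rewrite Rabs_right; lra.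
  - intros x Hx. destruct (dom_piece D HD x Hx) as [i [Hi Hxi]].
    rewrite (Tp_eq D HD i x Hi Hxi). pose proof (pform_range D HD i x Hi Hxi).
    pose proof (Hd i Hi). unfold in_circle. lra.
  - intros x y Hx Hy E. destruct (dom_piece D HD x Hx) as [i [Hi Hxi]].
    destruct (dom_piece D HD y Hy) as [j [Hj Hyj]].
    rewrite (Tp_eq D HD i x Hi Hxi), (Tp_eq D HD j y Hj Hyj) in E.
    destruct (Nat.eq_dec i j) as [<-|Hne].
    + pose proof (pform_diff D i x y). rewrite E in H. destruct (pf D i); lra.
    + pose proof (pform_range D HD i x Hi Hxi). pose proof (pform_range D HD j y Hj Hyj).
      destruct (Hdisj i j Hi Hj Hne); lra.
  - intros i Hi x y Hx Hy.
    pose proof (proj1 (pI_iff D HD i x Hi (pI_circ D i x Hx)) Hx).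
    pose proof (proj1 (pI_iff D HD i y Hi (pI_circ D i y Hy)) Hy).
    rewrite (Tp_eq D HD i x Hi H), (Tp_eq D HD i y Hi H2).
    pose proof (pform_diff D i x y). destruct (pf D i).
    + apply cdist_opp_diff; lra.
    + apply cdist_same_diff; lra.
  - intros [U [g (HU & HDU & [x [Ux nDx]] & Hgc & HgT & Hcont)]].
    assert (Cx : in_circle x) by (apply (proj1 HU); auto).
    assert (Hxa : exists i, (i < pn D)%nat /\ x = pa D i).
    { destruct (cover_closed D HD x Cx) as [i [Hi Hxi]].
      destruct (Req_dec x (pa D i)) as [E|E]; [exists i; auto|].
      destruct (Req_dec x (pa D i + pl D i)) as [E2|E2].
      - destruct (Nat.lt_ge_cases (S i) (pn D)).
        + exists (S i). split; auto. rewrite Hc; auto.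
        + assert (i = pred (pn D)) by lia. subst i. unfold in_circle in Cx. lra.
      - exfalso. apply nDx. exists i. split; auto.
        apply (pI_iff D HD i x Hi Cx). lra. }
    destruct Hxa as [i [Hi ->]].
    set (j := prevp D i).
    assert (Hj : (j < pn D)%nat) by (unfold j, prevp; destruct i; lia).
    assert (Hjend : pa D j + pl D j = pa D i \/ (i = 0%nat /\ pa D j + pl D j = 1)).
    { unfold j, prevp. destruct i as [|k]. right. auto. left. rewrite Hc; auto. }
    pose proof (Hjump i Hi) as Hji. fold j in Hji.
    assert (Hv : 0 <= endv D j <= 1 /\ 0 <= startv D i <= 1).
    { pose proof (Hd i Hi). pose proof (Hd j Hj). pose proof (Hl i Hi). pose proof (Hl j Hj).
      unfold endv, startv. destruct (pf D i), (pf D j); lra. }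
    destruct Hji as (Q1&Q2&Q3).
    pose proof (cdist_pos _ _ (proj1 Hv) (proj2 Hv) Q1 Q2 Q3) as Hd0.
    set (d0 := cdist (endv D j) (startv D i)) in *.
    destruct (Hcont (pa D i) (d0/4) Ux ltac:(lra)) as [dl [Hdl Hdl2]].
    pose proof (Hl i Hi). pose proof (Hl j Hj).
    set (h := Rmin (Rmin (dl/2) (d0/8)) (Rmin (pl D i / 2) (pl D j / 2))).
    assert (0 < h) by (unfold h; repeat apply Rmin_glb_lt; lra).
    assert (h <= dl/2 /\ h <= d0/8 /\ h <= pl D i / 2 /\ h <= pl D j / 2).
    { unfold h. repeat split.
      - eapply Rle_trans; apply Rmin_l.
      - eapply Rle_trans; [apply Rmin_l|apply Rmin_r].
      - eapply Rle_trans; [apply Rmin_r|apply Rmin_l].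
      - eapply Rle_trans; apply Rmin_r. }
    pose proof (pa_bounds D HD i Hi). pose proof (pa_bounds D HD j Hj).
    set (z := pa D i + h).
    assert (Hz : pa D i < z < pa D i + pl D i) by (unfold z; lra).
    assert (Dz : dom (pn D) (pI D) z).
    { exists i. split; auto. apply (pI_iff D HD i); auto. unfold in_circle; lra. }
    assert (Tz : cdist (Tp D z) (startv D i) <= h).
    { rewrite (Tp_eq D HD i z Hi Hz). eapply Rle_trans; [apply cdist_le_abs|].
      unfold pform, startv, z. destruct (pf D i).
      - replace (pa D i + pl D i + pd D i - (pa D i + h) - (pd D i + pl D i)) with (-h) by ring.
        rewrite Rabs_Ropp, Rabs_right; lra.
      - replace (pa D i + h - pa D i + pd D i - pd D i) with h by ring. rewrite Rabs_right; lra. }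
    assert (Gz : cdist (g (pa D i)) (Tp D z) < d0/4).
    { rewrite <- (HgT z Dz). apply Hdl2. apply HDU; auto.
      eapply Rle_lt_trans; [apply cdist_le_abs|]. unfold z.
      replace (pa D i - (pa D i + h)) with (-h) by ring. rewrite Rabs_Ropp, Rabs_right; lra. }
    set (y := pa D j + pl D j - h).
    assert (Hy : pa D j < y < pa D j + pl D j) by (unfold y; lra).
    assert (Dy : dom (pn D) (pI D) y).
    { exists j. split; auto. apply (pI_iff D HD j); auto. unfold in_circle; lra. }
    assert (Ty : cdist (endv D j) (Tp D y) <= h).
    { rewrite (Tp_eq D HD j y Hj Hy). eapply Rle_trans; [apply cdist_le_abs|].
      unfold pform, endv, y. destruct (pf D j).
      - replace (pd D j - (pa D j + pl D j + pd D j - (pa D j + pl D j - h))) with (-h) by ring.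
        rewrite Rabs_Ropp, Rabs_right; lra.
      - replace (pd D j + pl D j - (pa D j + pl D j - h - pa D j + pd D j)) with h by ring.
        rewrite Rabs_right; lra. }
    assert (Gy : cdist (g (pa D i)) (Tp D y) < d0/4).
    { rewrite <- (HgT y Dy). apply Hdl2. apply HDU; auto.
      assert (cdist (pa D i) y <= h).
      { destruct Hjend as [E|[Ei E]].
        - eapply Rle_trans; [apply cdist_le_abs|]. unfold y. rewrite E.
          replace (pa D i - (pa D i - h)) with h by ring. rewrite Rabs_right; lra.
        - eapply Rle_trans; [apply (cdist_min _ _ (-1))|]. unfold y. rewrite E.
          subst i. rewrite H0. simpl. replace (0 - (1 - h) - -1) with h by ring.
          rewrite Rabs_right; lra. }
      lra. }
    pose proof (cdist_triangle (endv D j) (Tp D y) (startv D i)) as T1.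
    pose proof (cdist_triangle (Tp D y) (g (pa D i)) (startv D i)) as T2.
    pose proof (cdist_triangle (g (pa D i)) (Tp D z) (startv D i)) as T3.
    rewrite (cdist_sym (Tp D y) (g (pa D i))) in T2.
    fold d0 in T1. lra.
Qed.

Definition flipcount (D : PD) : nat := length (filter (pf D) (seq 0 (pn D))).

Lemma PD_flips : forall D, PD_ok D -> exactly_flips (pn D) (pI D) (Tp D) (flipcount D).
Proof.
  intros D HD. exists (filter (pf D) (seq 0 (pn D))). split; [|split; [reflexivity|]].
  - apply NoDup_filter, seq_NoDup.
  - intros i. rewrite filter_In, in_seq. split.
    + intros [[_ Hi] Hf]. simpl in Hi. split; [lia|].
      intros x y Hx Hy.
      pose proof (proj1 (pI_iff D HD i x ltac:(lia) (pI_circ D i x Hx)) Hx).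
      pose proof (proj1 (pI_iff D HD i y ltac:(lia) (pI_circ D i y Hy)) Hy).
      rewrite (Tp_eq D HD i x ltac:(lia) H), (Tp_eq D HD i y ltac:(lia) H0).
      pose proof (pform_diff D i y x). rewrite Hf in H1. rewrite H1. reflexivity.
    + intros [Hi Hrev]. split; [split; simpl; lia|].
      destruct (pf D i) eqn:E; [reflexivity|exfalso].
      pose proof HD as (_&_&_&_&Hl&_). pose proof (Hl i Hi). pose proof (pa_bounds D HD i Hi).
      set (x := pa D i + pl D i / 4). set (y := pa D i + pl D i / 2).
      assert (Hx : pa D i < x < pa D i + pl D i) by (unfold x; lra).
      assert (Hy : pa D i < y < pa D i + pl D i) by (unfold y; lra).
      assert (Ix : pI D i x) by (apply (pI_iff D HD i); auto; unfold in_circle; split; lra).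
      assert (Iy : pI D i y) by (apply (pI_iff D HD i); auto; unfold in_circle; split; lra).
      pose proof (Hrev x y Ix Iy) as HR. rewrite (Tp_eq D HD i x Hi Hx), (Tp_eq D HD i y Hi Hy) in HR.
      pose proof (pform_diff D i y x) as HF. rewrite E in HF. rewrite HF in HR.
      unfold x, y in HR.
      rewrite md1_id in HR by lra. rewrite md1_neg in HR by lra. lra.
Qed.

Lemma odd_sq_neq : forall c b, ((2*c+1)*(2*c+1) <> 2*b*b)%Z.
Proof. intros. lia. Qed.
Lemma sqrt2_aux : forall n : nat, forall a b : Z, (Z.abs_nat b <= n)%nat -> (a*a = 2*b*b)%Z -> b = 0%Z.
Proof.
  induction n as [|n IH]; intros a b Hb E; [lia|].
  destruct (Z.Even_or_Odd a) as [[c Hc]|[c Hc]]; subst a.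
  - assert (E2 : (b*b = 2*c*c)%Z) by lia.
    destruct (Z.Even_or_Odd b) as [[d Hd]|[d Hd]]; subst b.
    + assert (E3 : (c*c = 2*d*d)%Z) by lia.
      assert (d = 0%Z) by (apply (IH c d); lia). lia.
    + exfalso. apply (odd_sq_neq d c). lia.
  - exfalso. apply (odd_sq_neq c b). lia.
Qed.

Definition Irr (al : R) : Prop := forall (z : Z) (q : nat), (0 < q)%nat -> al * INR q <> IZR z.

Definition alpha0 : R := sqrt 2 - 1.

Lemma alpha0_range : 0 < alpha0 < 1.
Proof.
  unfold alpha0. assert (1 < sqrt 2).
  { rewrite <- sqrt_1. apply sqrt_lt_1; lra. }
  assert (sqrt 2 < 2).
  { replace 2 with (sqrt 4) at 2. apply sqrt_lt_1; lra.
    replace 4 with (2*2) by ring. rewrite sqrt_square; lra. }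
  lra.
Qed.

Lemma alpha0_irr : Irr alpha0.
Proof.
  intros z q Hq E. unfold alpha0 in E.
  assert (E1 : sqrt 2 * INR q = IZR z + INR q) by lra.
  assert (E2 : (sqrt 2 * INR q) * (sqrt 2 * INR q) = 2 * (INR q * INR q)).
  { replace ((sqrt 2 * INR q) * (sqrt 2 * INR q)) with ((sqrt 2 * sqrt 2) * (INR q * INR q)) by ring.
    rewrite sqrt_sqrt; lra. }
  rewrite E1 in E2. rewrite INR_IZR_INZ in E2.
  rewrite <- plus_IZR, <- !mult_IZR in E2. apply eq_IZR in E2.
  assert (Z.of_nat q = 0%Z).
  { apply (sqrt2_aux (Z.abs_nat (Z.of_nat q)) (z + Z.of_nat q)); [lia|lia]. }
  lia.
Qed.

Lemma pigeon : forall N (b : nat -> nat), (forall j, (j <= N)%nat -> (b j < N)%nat) ->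
  exists j1 j2, (j1 < j2 <= N)%nat /\ b j1 = b j2.
Proof.
  induction N as [|N IH]; intros b Hb.
  - specialize (Hb 0%nat ltac:(lia)). lia.
  - destruct (classic (exists j, (j < S N)%nat /\ b j = b (S N))) as [[j [Hj E]]|Hn].
    + exists j, (S N). split; [lia|auto].
    + remember (b (S N)) as v eqn:Hv.
      set (b' := fun j => if Nat.ltb (b j) v then b j else pred (b j)).
      destruct (IH b') as [j1 [j2 [Hj Hb']]].
      { intros j Hj. unfold b'. pose proof (Hb j ltac:(lia)). pose proof (Hb (S N) ltac:(lia)).
        destruct (Nat.ltb_spec (b j) v). lia.
        assert (b j <> v) by (intro; apply Hn; exists j; split; [lia|auto]). lia. }
      exists j1, j2. split; [lia|].
      unfold b' in Hb'.
      assert (b j1 <> v) by (intro; apply Hn; exists j1; split; [lia|auto]).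
      assert (b j2 <> v) by (intro; apply Hn; exists j2; split; [lia|auto]).
      destruct (Nat.ltb_spec (b j1) v), (Nat.ltb_spec (b j2) v); lia.
Qed.

Lemma md1_shift : forall x z, md1 (x + IZR z) = md1 x.
Proof.
  intros x z. destruct (md1_int x) as [z0 H0]. pose proof (md1_range x).
  rewrite H0. rewrite (md1_spec _ (z0 + z)); rewrite plus_IZR; lra.
Qed.

Lemma nat_floor : forall x, 0 <= x -> exists k : nat, INR k <= x < INR k + 1.
Proof.
  intros x Hx. destruct (base_Int_part x) as [H1 H2].
  assert (0 <= Int_part x)%Z.
  { apply le_IZR. destruct (Rle_lt_dec 0 (IZR (Int_part x))); auto.
    assert (IZR (Int_part x) <= -1). { replace (-1) with (IZR (-1)) by reflexivity.
      apply IZR_le. apply lt_IZR in r. lia. } lra. }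
  exists (Z.to_nat (Int_part x)). rewrite INR_IZR_INZ, Z2Nat.id by lia. lra.
Qed.

Lemma small_step : forall al, 0 < al < 1 -> Irr al -> forall N, (1 <= N)%nat ->
  exists q : nat, (0 < q)%nat /\
   ((0 < md1 (INR q * al) < / INR N) \/ (1 - / INR N < md1 (INR q * al) < 1)).
Proof.
  intros al Hal Hirr N HN.
  assert (HNpos : 0 < INR N) by (apply lt_0_INR; lia).
  set (b := fun j => Z.to_nat (Int_part (md1 (INR j * al) * INR N))).
  assert (Hbb : forall j, IZR (Z.of_nat (b j)) <= md1 (INR j * al) * INR N < IZR (Z.of_nat (b j)) + 1).
  { intros j. unfold b. pose proof (md1_range (INR j * al)).
    destruct (base_Int_part (md1 (INR j * al) * INR N)).
    assert (0 <= Int_part (md1 (INR j * al) * INR N))%Z.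
    { apply le_IZR. destruct (Rle_lt_dec 0 (IZR (Int_part (md1 (INR j * al) * INR N)))); auto.
      assert (IZR (Int_part (md1 (INR j * al) * INR N)) <= -1).
      { replace (-1) with (IZR (-1)) by reflexivity. apply IZR_le. apply lt_IZR in r. lia. }
      assert (0 <= md1 (INR j * al) * INR N) by (apply Rmult_le_pos; lra). lra. }
    rewrite Z2Nat.id by lia. lra. }
  destruct (pigeon N b) as [j1 [j2 [Hj E]]].
  { intros j Hj. pose proof (Hbb j). pose proof (md1_range (INR j * al)).
    assert (md1 (INR j * al) * INR N < INR N) by (rewrite <- (Rmult_1_l (INR N)) at 2; apply Rmult_lt_compat_r; lra).
    assert (IZR (Z.of_nat (b j)) < IZR (Z.of_nat N)) by (rewrite <- !INR_IZR_INZ in *; lra).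
    apply lt_IZR in H2. lia. }
  pose proof (Hbb j1) as B1. pose proof (Hbb j2) as B2. rewrite E in B1.
  set (e := md1 (INR j2 * al) - md1 (INR j1 * al)).
  assert (He : - / INR N < e < / INR N).
  { assert (Rabs (e * INR N) < 1) by (unfold e; apply Rabs_def1; lra).
    rewrite Rabs_mult, (Rabs_right (INR N)) in H by lra.
    assert (Rabs e < / INR N).
    { apply (Rmult_lt_reg_r (INR N)); auto. rewrite Rinv_l by lra. exact H. }
    apply Rabs_def2 in H0. destruct H0; split; assumption. }
  exists (j2 - j1)%nat. split; [lia|].
  assert (Eq : INR (j2 - j1) * al = IZR (Int_part (INR j2 * al) - Int_part (INR j1 * al)) + e).
  { rewrite minus_INR by lia. rewrite minus_IZR. unfold e, md1, frac_part. ring. }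
  assert (Hq : md1 (INR (j2 - j1) * al) <> 0).
  { intro Z0. destruct (md1_int (INR (j2 - j1) * al)) as [z Hz]. rewrite Z0 in Hz.
    apply (Hirr z (j2 - j1)%nat ltac:(lia)). rewrite Rmult_comm. lra. }
  pose proof (Rinv_0_lt_compat _ HNpos).
  assert (/ INR N <= 1).
  { rewrite <- Rinv_1. apply Rinv_le_contravar; [lra|]. replace 1 with (INR 1) by reflexivity.
    apply le_INR; lia. }
  destruct (Rle_lt_dec 0 e).
  - left. rewrite Eq, Rplus_comm, md1_shift in *. rewrite md1_id in * by lra. lra.
  - right. rewrite Eq, Rplus_comm, md1_shift in *. rewrite md1_neg in * by lra. lra.
Qed.

Lemma exists_N : forall eps, 0 < eps -> exists N : nat, (1 <= N)%nat /\ / INR N < eps.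
Proof.
  intros eps He. destruct (nat_floor (/ eps)) as [k Hk]. { left. apply Rinv_0_lt_compat; auto. }
  exists (S k). split; [lia|]. rewrite S_INR.
  assert (0 < INR k + 1) by (pose proof (pos_INR k); lra).
  rewrite <- (Rinv_inv eps). apply Rinv_lt_contravar.
  - apply Rmult_lt_0_compat; auto. apply Rinv_0_lt_compat; auto.
  - lra.
Qed.

Lemma orbit_shift : forall al q k (I : Z) r, INR q * al = IZR I + r ->
  md1 ((INR (k * q) + / 2) * al) = md1 (al / 2 + INR k * r).
Proof.
  intros al q k I r H.
  replace ((INR (k * q) + / 2) * al) with ((al / 2 + INR k * r) + IZR (Z.of_nat k * I)).
  - apply md1_shift.
  - rewrite mult_IZR, <- INR_IZR_INZ, mult_INR.
    replace ((INR k * INR q + / 2) * al) with (INR k * (INR q * al) + al / 2) by field. rewrite H. ring.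
Qed.

Lemma density : forall al, 0 < al < 1 -> Irr al -> forall z eps, 0 < z < 1 -> 0 < eps ->
  exists k : nat, Rabs (md1 ((INR k + / 2) * al) - z) < eps.
Proof.
  intros al Hal Hirr z eps Hz He.
  set (e1 := Rmin eps (Rmin z (1 - z))).
  assert (He1 : 0 < e1) by (unfold e1; repeat apply Rmin_glb_lt; lra).
  assert (e1 <= eps /\ e1 <= z /\ e1 <= 1 - z).
  { unfold e1. repeat split. apply Rmin_l. eapply Rle_trans; [apply Rmin_r|apply Rmin_l].
    eapply Rle_trans; apply Rmin_r. }
  destruct (exists_N e1 He1) as [N [HN HNe]].
  destruct (small_step al Hal Hirr N HN) as [q [Hq [C|C]]].
  - set (d := md1 (INR q * al)) in *.
    assert (Eq : INR q * al = IZR (Int_part (INR q * al)) + d) by (unfold d, md1, frac_part; ring).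
    assert (Hfl : forall t, 0 <= t -> exists k : nat, INR k * d <= t < INR k * d + d).
    { intros t Ht. destruct (nat_floor (t / d)) as [k Hk]. { unfold Rdiv; apply Rmult_le_pos; [lra|left; apply Rinv_0_lt_compat; lra]. }
      exists k. destruct Hk as [Hk1 Hk2].
      split.
      - apply (Rmult_le_compat_r d) in Hk1; [|lra]. unfold Rdiv in Hk1.
        rewrite Rmult_assoc, Rinv_l in Hk1 by lra. lra.
      - apply (Rmult_lt_compat_r d) in Hk2; [|lra]. unfold Rdiv in Hk2.
        rewrite Rmult_assoc, Rinv_l in Hk2 by lra. lra. }
    destruct (Rle_lt_dec (al/2) z).
    + destruct (Hfl (z - al/2) ltac:(lra)) as [k Hk].
      exists (k * q)%nat. rewrite (orbit_shift al q k _ d Eq).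
      rewrite md1_id by (pose proof (pos_INR k); split; [apply Rplus_le_le_0_compat; [lra|apply Rmult_le_pos; lra]|lra]).
      apply Rabs_def1; lra.
    + destruct (Hfl (z + 1 - al/2) ltac:(lra)) as [k Hk].
      exists (k * q)%nat. rewrite (orbit_shift al q k _ d Eq).
      rewrite (md1_spec _ 1) by (simpl; lra). simpl.
      apply Rabs_def1; lra.
  - set (d := 1 - md1 (INR q * al)) in *.
    assert (Eq : INR q * al = IZR (Int_part (INR q * al) + 1) + - d)
      by (unfold d, md1, frac_part; rewrite plus_IZR; simpl; ring).
    assert (Hd : 0 < d < / INR N) by (unfold d; lra).
    assert (Hfl : forall t, 0 <= t -> exists k : nat, INR k * d <= t < INR k * d + d).
    { intros t Ht. destruct (nat_floor (t / d)) as [k Hk]. { unfold Rdiv; apply Rmult_le_pos; [lra|left; apply Rinv_0_lt_compat; lra]. }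
      exists k. destruct Hk as [Hk1 Hk2].
      split.
      - apply (Rmult_le_compat_r d) in Hk1; [|lra]. unfold Rdiv in Hk1.
        rewrite Rmult_assoc, Rinv_l in Hk1 by lra. lra.
      - apply (Rmult_lt_compat_r d) in Hk2; [|lra]. unfold Rdiv in Hk2.
        rewrite Rmult_assoc, Rinv_l in Hk2 by lra. lra. }
    destruct (Rle_lt_dec z (al/2)).
    + destruct (Hfl (al/2 - z) ltac:(lra)) as [k Hk].
      exists (k * q)%nat. rewrite (orbit_shift al q k _ (-d) Eq).
      rewrite md1_id by lra.
      apply Rabs_def1; lra.
    + destruct (Hfl (al/2 - z + 1) ltac:(lra)) as [k Hk].
      exists (k * q)%nat. rewrite (orbit_shift al q k _ (-d) Eq).
      rewrite md1_neg by lra.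
      apply Rabs_def1; lra.
Qed.

Lemma fwd_trans : forall D T a b p q r, fwd D T a p q -> fwd D T b q r -> fwd D T (b + a) p r.
Proof.
  intros D T a b. revert a. induction b as [|b IH]; intros a p q r H1 H2.
  - simpl in *. subst. auto.
  - simpl in H2. destruct H2 as [s [Hs [Ds E]]]. simpl. exists s. split; auto.
    apply (IH a p q s H1 Hs).
Qed.

Definition rho (L be x : R) : R := if Rlt_dec x (L - be) then x + be else x + be - L.

Lemma orb_nonzero : forall al, Irr al -> forall k : nat, md1 ((INR k + / 2) * al) <> 0.
Proof.
  intros al Hirr k E. destruct (md1_int ((INR k + / 2) * al)) as [z Hz].
  apply (Hirr (2 * z)%Z (2 * k + 1)%nat ltac:(lia)).
  rewrite mult_IZR. rewrite plus_INR, mult_INR. simpl. rewrite E in Hz.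
  replace (IZR z) with ((INR k + / 2) * al) by lra. field.
Qed.

Lemma orb_notcut : forall al, Irr al -> forall k : nat, md1 ((INR k + / 2) * al) <> 1 - al.
Proof.
  intros al Hirr k E. destruct (md1_int ((INR k + / 2) * al)) as [z Hz].
  apply (Hirr (2 * z + 2)%Z (2 * k + 3)%nat ltac:(lia)).
  rewrite plus_IZR, mult_IZR. rewrite plus_INR, mult_INR. simpl. rewrite E in Hz.
  replace (IZR z) with ((INR k + / 2) * al - (1 - al)) by lra. field.
Qed.

Lemma orb_step : forall al, 0 < al < 1 -> forall k : nat,
  md1 ((INR (S k) + / 2) * al) =
  if Rlt_dec (md1 ((INR k + / 2) * al)) (1 - al) then md1 ((INR k + / 2) * al) + al
  else md1 ((INR k + / 2) * al) + al - 1.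
Proof.
  intros al Hal k. destruct (md1_int ((INR k + / 2) * al)) as [z Hz].
  pose proof (md1_range ((INR k + / 2) * al)).
  rewrite S_INR. destruct Rlt_dec.
  - rewrite (md1_spec _ z); lra.
  - rewrite (md1_spec _ (z + 1)); rewrite plus_IZR; lra.
Qed.

Lemma tower_transitive : forall (Dm : R -> Prop) (T : R -> R) (m : nat) (L al : R) (Psi : nat -> R -> R),
  0 < L <= 1 -> 0 < al < 1 -> Irr al -> (1 <= m)%nat ->
  (forall x, 0 < x < L -> in_circle (Psi 0%nat x)) ->
  (forall x, 0 < x < L -> x <> L - al * L -> fwd Dm T m (Psi 0%nat x) (Psi 0%nat (rho L (al * L) x))) ->
  (forall j x, (j < m)%nat -> 0 < x < L -> fwd Dm T j (Psi 0%nat x) (Psi j x)) ->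
  (forall j x y, (j < m)%nat -> Rabs (Psi j x - Psi j y) = Rabs (x - y)) ->
  (forall y eps, in_circle y -> 0 < eps -> exists j x, (j < m)%nat /\ 0 < x < L /\ cdist y (Psi j x) < eps) ->
  transitive Dm T.
Proof.
  intros Dm T m L al Psi HL Hal Hirr Hm Hcirc Hrho HPsi Hiso Hcov.
  set (xk := fun k : nat => L * md1 ((INR k + / 2) * al)).
  assert (Hxk : forall k, 0 < xk k < L).
  { intros k. unfold xk. pose proof (md1_range ((INR k + / 2) * al)). pose proof (orb_nonzero al Hirr k).
    split. apply Rmult_lt_0_compat; lra. rewrite <- (Rmult_1_r L) at 2. apply Rmult_lt_compat_l; lra. }
  assert (Hfk : forall k, fwd Dm T (k * m) (Psi 0%nat (xk 0%nat)) (Psi 0%nat (xk k))).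
  { induction k as [|k IH]. simpl. reflexivity.
    replace (S k * m)%nat with (m + k * m)%nat by lia.
    apply (fwd_trans _ _ _ _ _ (Psi 0%nat (xk k))); auto.
    assert (xk k <> L - al * L).
    { unfold xk. intro E. apply (orb_notcut al Hirr k).
      apply (Rmult_eq_reg_l L); lra. }
    replace (xk (S k)) with (rho L (al * L) (xk k)). apply Hrho; auto.
    unfold rho, xk. rewrite (orb_step al Hal k).
    pose proof (md1_range ((INR k + / 2) * al)).
    destruct (Rlt_dec (L * md1 ((INR k + / 2) * al)) (L - al * L));
    destruct (Rlt_dec (md1 ((INR k + / 2) * al)) (1 - al)).
    - ring.
    - exfalso. apply n. apply (Rmult_lt_reg_l L); lra.
    - exfalso. apply n. nra.
    - ring. }
  exists (Psi 0%nat (xk 0%nat)). split. { apply Hcirc. apply Hxk. }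
  intros y eps Hy He.
  destruct (Hcov y (eps/2) Hy ltac:(lra)) as [j [x [Hj [Hx Hc]]]].
  destruct (density al Hal Hirr (x / L) (eps / 2 / L)) as [k Hk].
  { split. apply Rdiv_lt_0_compat; lra. apply (Rmult_lt_reg_r L); [lra|].
    unfold Rdiv. rewrite Rmult_assoc, Rinv_l; lra. }
  { apply Rdiv_lt_0_compat; lra. }
  exists (Psi j (xk k)). split.
  - exists (j + k * m)%nat. left. apply (fwd_trans _ _ _ _ _ (Psi 0%nat (xk k))); auto.
  - assert (Rabs (xk k - x) < eps / 2).
    { unfold xk. replace (L * md1 ((INR k + / 2) * al) - x) with (L * (md1 ((INR k + / 2) * al) - x / L))
        by (field; lra).
      rewrite Rabs_mult, Rabs_right by lra.
      apply (Rmult_lt_compat_l L) in Hk; [|lra].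
      replace (L * (eps / 2 / L)) with (eps / 2) in Hk by (field; lra). lra. }
    pose proof (cdist_le_abs (Psi j (xk k)) (Psi j x)). rewrite Hiso in H0 by auto.
    pose proof (cdist_triangle (Psi j (xk k)) (Psi j x) y).
    rewrite (cdist_sym (Psi j x) y) in H1. lra.
Qed.

Record SD := mkSD { sm : nat; slv : nat -> nat; slvi : nat -> nat; so : nat -> bool; smg : bool }.

Definition sg (S : SD) (p : nat) : nat := slv S (Datatypes.S (slvi S p)).
Definition fs (S : SD) (p : nat) : bool := so S (slvi S p).
Fixpoint par (S : SD) (j : nat) : bool :=
  match j with O => false | Datatypes.S k => xorb (par S k) (so S k) end.
Definition Pp (S : SD) : bool := par S (pred (sm S)).
Definition off (S : SD) : nat := if smg S then 1%nat else 0%nat.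
Definition Ls (S : SD) : R := / INR (sm S).
Definition bes (S : SD) : R := alpha0 * Ls S.
Definition bs (S : SD) : nat := slv S 0.
Definition lenTL (S : SD) : R := if Pp S then bes S else Ls S - bes S.
Definition lenTR (S : SD) : R := if Pp S then Ls S - bes S else bes S.
Definition spi (S : SD) (i : nat) : nat := if Nat.eqb i 0 then off S else (i + off S)%nat.
Definition spl (S : SD) (i : nat) : nat := if Nat.eqb i 0 then 0%nat else (i + off S)%nat.
Definition endk (S : SD) (p : nat) : nat := if fs S p then sg S p else Datatypes.S (sg S p).
Definition startk (S : SD) (p : nat) : nat := if fs S p then Datatypes.S (sg S p) else sg S p.
Definition dist_nat (m a b : nat) : Prop := a <> b /\ a <> (b + m)%nat /\ b <> (a + m)%nat.

Definition s_pa (S : SD) (i : nat) : R :=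
  if Nat.ltb (i + off S) (pred (sm S)) then (if Nat.eqb i 0 then 0 else INR (i + off S) * Ls S)
  else if Nat.eqb (i + off S) (pred (sm S)) then INR (pred (sm S)) * Ls S
  else INR (pred (sm S)) * Ls S + lenTL S.
Definition s_pl (S : SD) (i : nat) : R :=
  if Nat.ltb (i + off S) (pred (sm S)) then (if Nat.eqb i 0 then INR (1 + off S) * Ls S else Ls S)
  else if Nat.eqb (i + off S) (pred (sm S)) then lenTL S else lenTR S.
Definition s_pd (S : SD) (i : nat) : R :=
  if Nat.ltb (i + off S) (pred (sm S)) then INR (sg S (spi S i)) * Ls S
  else if Nat.eqb (i + off S) (pred (sm S)) then INR (bs S) * Ls S + (if Pp S then 0 else bes S)
  else INR (bs S) * Ls S + (if Pp S then bes S else 0).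
Definition s_pf (S : SD) (i : nat) : bool :=
  if Nat.ltb (i + off S) (pred (sm S)) then fs S (spi S i) else Pp S.

Definition mkD (S : SD) : PD := mkPD (sm S + 1 - off S) (s_pa S) (s_pl S) (s_pd S) (s_pf S).

Definition SD_ok (S : SD) : Prop :=
  (3 <= sm S)%nat /\
  (forall j, (j < sm S)%nat -> (slv S j < sm S)%nat /\ slvi S (slv S j) = j) /\
  (forall p, (p < sm S)%nat -> (slvi S p < sm S)%nat /\ slv S (slvi S p) = p) /\
  slv S (pred (sm S)) = pred (sm S) /\
  (smg S = true -> fs S 0 = true /\ fs S 1 = true /\ sg S 0 = Datatypes.S (sg S 1%nat)) /\
  (forall p, (Datatypes.S p < pred (sm S))%nat -> (smg S = true -> p <> 0%nat) ->
     dist_nat (sm S) (endk S p) (startk S (Datatypes.S p))).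

Lemma Ls_pos : forall S, SD_ok S -> 0 < Ls S.
Proof. intros S HS. unfold Ls. apply Rinv_0_lt_compat, lt_0_INR. destruct HS; lia. Qed.

Lemma Ls_m : forall S, SD_ok S -> INR (sm S) * Ls S = 1.
Proof. intros S HS. unfold Ls. apply Rinv_r. apply not_0_INR. destruct HS; lia. Qed.

Lemma Ls_lt1 : forall S, SD_ok S -> Ls S < 1.
Proof.
  intros S HS. pose proof (Ls_m S HS). pose proof (Ls_pos S HS).
  assert (3 <= INR (sm S)) by (replace 3 with (INR 3) by (simpl; lra); apply le_INR; destruct HS; lia).
  nra.
Qed.

Lemma bes_range : forall S, SD_ok S -> 0 < bes S < Ls S.
Proof.
  intros S HS. pose proof (Ls_pos S HS). pose proof alpha0_range. unfold bes. split; nra.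
Qed.

Lemma INR_Ls_le : forall S a b, SD_ok S -> (a <= b)%nat -> INR a * Ls S <= INR b * Ls S.
Proof. intros. apply Rmult_le_compat_r. left; apply Ls_pos; auto. apply le_INR; auto. Qed.

Lemma INR_S_Ls : forall S a, INR (Datatypes.S a) * Ls S = INR a * Ls S + Ls S.
Proof. intros. rewrite S_INR. ring. Qed.

Lemma off_le : forall S, (off S <= 1)%nat.
Proof. intros. unfold off. destruct (smg S); lia. Qed.

Lemma slv_inj : forall S, SD_ok S -> forall a b, (a < sm S)%nat -> (b < sm S)%nat -> slv S a = slv S b -> a = b.
Proof.
  intros S HS a b Ha Hb E. destruct HS as (_&H2&_).
  rewrite <- (proj2 (H2 a Ha)), <- (proj2 (H2 b Hb)), E. reflexivity.
Qed.

Lemma slvi_nontop : forall S, SD_ok S -> forall p, (p < sm S)%nat -> p <> pred (sm S) -> (slvi S p < pred (sm S))%nat.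
Proof.
  intros S HS p Hp Hne. pose proof HS as (H1&H2&H3&H4&_).
  destruct (H3 p Hp) as [Hl He].
  destruct (Nat.eq_dec (slvi S p) (pred (sm S))) as [E|]; [|lia].
  exfalso. apply Hne. rewrite <- He, E, H4. reflexivity.
Qed.

Lemma sg_lt : forall S, SD_ok S -> forall p, (p < sm S)%nat -> p <> pred (sm S) -> (sg S p < sm S)%nat.
Proof.
  intros S HS p Hp Hne. pose proof (slvi_nontop S HS p Hp Hne). unfold sg.
  destruct HS as (_&H2&_). apply H2. lia.
Qed.

Lemma sg_ne_b : forall S, SD_ok S -> forall p, (p < sm S)%nat -> p <> pred (sm S) -> sg S p <> bs S.
Proof.
  intros S HS p Hp Hne E. pose proof (slvi_nontop S HS p Hp Hne). unfold sg, bs in E.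
  apply (slv_inj S HS) in E; [lia|lia|destruct HS; lia].
Qed.

Lemma sg_inj : forall S, SD_ok S -> forall p q, (p < sm S)%nat -> p <> pred (sm S) ->
  (q < sm S)%nat -> q <> pred (sm S) -> sg S p = sg S q -> p = q.
Proof.
  intros S HS p q Hp Hnp Hq Hnq E.
  pose proof (slvi_nontop S HS p Hp Hnp). pose proof (slvi_nontop S HS q Hq Hnq).
  unfold sg in E. apply (slv_inj S HS) in E; try lia.
  pose proof HS as (_&_&H3&_).
  rewrite <- (proj2 (H3 p Hp)), <- (proj2 (H3 q Hq)). f_equal. lia.
Qed.

Lemma bs_lt : forall S, SD_ok S -> (bs S < sm S)%nat.
Proof. intros S HS. unfold bs. pose proof HS as (H1&H2&_). apply H2. lia. Qed.

Lemma bs_ne_top : forall S, SD_ok S -> bs S <> pred (sm S).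
Proof.
  intros S HS E. unfold bs in E. pose proof HS as (H1&_&_&H4&_).
  rewrite <- H4 in E. apply (slv_inj S HS) in E; lia.
Qed.

Lemma view_slot : forall S i, (i + off S < pred (sm S))%nat ->
  s_pa S i = INR (spl S i) * Ls S /\ s_pl S i = INR (Datatypes.S (spi S i) - spl S i) * Ls S /\
  s_pd S i = INR (sg S (spi S i)) * Ls S /\ s_pf S i = fs S (spi S i).
Proof.
  intros S i H. unfold s_pa, s_pl, s_pd, s_pf, spl, spi.
  destruct (Nat.ltb_spec (i + off S) (pred (sm S))); [|lia].
  destruct (Nat.eqb_spec i 0).
  - subst. simpl. repeat split; ring.
  - split; [auto|]. split; [|auto]. replace (Datatypes.S (i + off S) - (i + off S))%nat with 1%nat by lia.
    simpl. ring.
Qed.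

Lemma view_TL : forall S i, (i + off S = pred (sm S))%nat ->
  s_pa S i = INR (pred (sm S)) * Ls S /\ s_pl S i = lenTL S /\
  s_pd S i = INR (bs S) * Ls S + (if Pp S then 0 else bes S) /\ s_pf S i = Pp S.
Proof.
  intros S i H. unfold s_pa, s_pl, s_pd, s_pf.
  destruct (Nat.ltb_spec (i + off S) (pred (sm S))); [lia|].
  destruct (Nat.eqb_spec (i + off S) (pred (sm S))); [|lia]. auto.
Qed.

Lemma view_TR : forall S i, (i + off S = sm S)%nat -> (1 <= sm S)%nat ->
  s_pa S i = INR (pred (sm S)) * Ls S + lenTL S /\ s_pl S i = lenTR S /\
  s_pd S i = INR (bs S) * Ls S + (if Pp S then bes S else 0) /\ s_pf S i = Pp S.
Proof.
  intros S i H H1. unfold s_pa, s_pl, s_pd, s_pf.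
  destruct (Nat.ltb_spec (i + off S) (pred (sm S))); [lia|].
  destruct (Nat.eqb_spec (i + off S) (pred (sm S))); [lia|]. auto.
Qed.

Lemma spl_spi : forall S i, (spl S i <= spi S i)%nat /\ (spi S i <= i + off S)%nat.
Proof. intros. unfold spl, spi. destruct (Nat.eqb_spec i 0); lia. Qed.

Lemma lenT_sum : forall S, lenTL S + lenTR S = Ls S.
Proof. intros. unfold lenTL, lenTR. destruct (Pp S); ring. Qed.

Lemma lenT_pos : forall S, SD_ok S -> 0 < lenTL S /\ 0 < lenTR S.
Proof. intros S HS. pose proof (bes_range S HS). unfold lenTL, lenTR. destruct (Pp S); lra. Qed.

Lemma spl_S : forall S i, spl S (Datatypes.S i) = (Datatypes.S i + off S)%nat.
Proof. reflexivity. Qed.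
Lemma spi_S : forall S i, spi S (Datatypes.S i) = (Datatypes.S i + off S)%nat.
Proof. reflexivity. Qed.
Lemma spl_0 : forall S, spl S 0 = 0%nat.
Proof. reflexivity. Qed.
Lemma spi_0 : forall S, spi S 0 = off S.
Proof. reflexivity. Qed.

Lemma INR_Ls_eq : forall S a b, a = b -> INR a * Ls S = INR b * Ls S.
Proof. intros; subst; reflexivity. Qed.

Lemma mkD_contig : forall S, SD_ok S -> forall i, (Datatypes.S i < sm S + 1 - off S)%nat ->
  s_pa S (Datatypes.S i) = s_pa S i + s_pl S i.
Proof.
  intros S HS i Hi. pose proof (off_le S). pose proof HS as (H1&_).
  destruct (Nat.lt_ge_cases (i + off S) (pred (sm S))) as [Hlt|Hge].
  - destruct (view_slot S i Hlt) as (A1&A2&_).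
    rewrite A1, A2.
    destruct (Nat.lt_ge_cases (Datatypes.S i + off S) (pred (sm S))).
    + destruct (view_slot S (Datatypes.S i) H0) as (B1&_). rewrite B1, spl_S.
      destruct i as [|k].
      * rewrite spl_0, spi_0. change (INR 0) with 0. rewrite Rmult_0_l, Rplus_0_l.
        apply INR_Ls_eq. lia.
      * rewrite spl_S, spi_S. rewrite <- Rmult_plus_distr_r, <- plus_INR. apply INR_Ls_eq. lia.
    + destruct (view_TL S (Datatypes.S i) ltac:(lia)) as (B1&_). rewrite B1.
      rewrite <- Rmult_plus_distr_r, <- plus_INR. apply INR_Ls_eq.
      pose proof (spl_spi S i). destruct i as [|k].
      * rewrite spl_0, spi_0. lia.
      * rewrite spl_S, spi_S. lia.
  - destruct (Nat.eq_dec (i + off S) (pred (sm S))).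
    + destruct (view_TL S i e) as (A1&A2&_). destruct (view_TR S (Datatypes.S i) ltac:(lia) ltac:(lia)) as (B1&_).
      rewrite A1, A2, B1. reflexivity.
    + lia.
Qed.

Lemma mkD_last : forall S, SD_ok S ->
  s_pa S (pred (sm S + 1 - off S)) + s_pl S (pred (sm S + 1 - off S)) = 1.
Proof.
  intros S HS. pose proof (off_le S). pose proof HS as (H1&_).
  destruct (view_TR S (pred (sm S + 1 - off S)) ltac:(lia) ltac:(lia)) as (A1&A2&_).
  rewrite A1, A2. pose proof (lenT_sum S). rewrite <- (Ls_m S HS).
  replace (sm S) with (Datatypes.S (pred (sm S))) at 2 by lia. rewrite S_INR. lra.
Qed.

Lemma merged_info : forall S i, spl S i <> spi S i -> i = 0%nat /\ smg S = true /\ spl S i = 0%nat /\ spi S i = 1%nat.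
Proof.
  intros S i H. unfold spl, spi, off in *. destruct (Nat.eqb_spec i 0); [|lia].
  destruct (smg S); [|lia]. auto.
Qed.

Lemma slot_img : forall S, SD_ok S -> forall i k, (i + off S < pred (sm S))%nat ->
  (sg S (spi S i) <= k < sg S (spi S i) + (Datatypes.S (spi S i) - spl S i))%nat ->
  exists p, (spl S i <= p <= spi S i)%nat /\ k = sg S p.
Proof.
  intros S HS i k Hi Hk. pose proof (spl_spi S i).
  destruct (Nat.eq_dec (spl S i) (spi S i)) as [E|E].
  - exists (spi S i). split; [lia|]. rewrite E in Hk. lia.
  - destruct (merged_info S i E) as (->&Hm&E1&E2). rewrite E1, E2 in *.
    pose proof HS as (_&_&_&_&H5&_). destruct (H5 Hm) as (_&_&Hs).
    destruct (Nat.eq_dec k (sg S 1)). exists 1%nat. split; [lia|auto].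
    exists 0%nat. split; [lia|]. lia.
Qed.

Lemma slot_img_bound : forall S, SD_ok S -> forall i, (i + off S < pred (sm S))%nat ->
  (sg S (spi S i) + (Datatypes.S (spi S i) - spl S i) <= sm S)%nat.
Proof.
  intros S HS i Hi. pose proof (spl_spi S i). pose proof HS as (H1&_).
  destruct (Nat.eq_dec (spl S i) (spi S i)) as [E|E].
  - rewrite E. pose proof (sg_lt S HS (spi S i) ltac:(lia) ltac:(lia)). lia.
  - destruct (merged_info S i E) as (->&Hm&E1&E2). rewrite E1, E2 in *.
    pose proof HS as (_&_&_&_&H5&_). destruct (H5 Hm) as (_&_&Hs).
    pose proof (sg_lt S HS 0 ltac:(lia) ltac:(lia)). lia.
Qed.

Lemma nat_int_disj : forall s1 w1 s2 w2 : nat,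
  (forall k, (s1 <= k < s1 + w1)%nat -> (s2 <= k < s2 + w2)%nat -> False) ->
  (0 < w1)%nat -> (0 < w2)%nat -> (s1 + w1 <= s2 \/ s2 + w2 <= s1)%nat.
Proof.
  intros s1 w1 s2 w2 H H1 H2.
  destruct (Nat.le_gt_cases (s1 + w1) s2); [left; auto|].
  destruct (Nat.le_gt_cases (s2 + w2) s1); [right; auto|].
  exfalso. apply (H (Nat.max s1 s2)); lia.
Qed.

Lemma slot_pieces_disj : forall S, SD_ok S -> forall i j, (i + off S < pred (sm S))%nat ->
  (j + off S < pred (sm S))%nat -> i <> j ->
  (sg S (spi S i) + (Datatypes.S (spi S i) - spl S i) <= sg S (spi S j) \/
   sg S (spi S j) + (Datatypes.S (spi S j) - spl S j) <= sg S (spi S i))%nat.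
Proof.
  intros S HS i j Hi Hj Hne. pose proof (spl_spi S i). pose proof (spl_spi S j).
  apply nat_int_disj; try lia.
  intros k K1 K2.
  destruct (slot_img S HS i k Hi K1) as [p [Hp Ep]].
  destruct (slot_img S HS j k Hj K2) as [q [Hq Eq]].
  rewrite Ep in Eq. apply (sg_inj S HS) in Eq; try lia.
  subst q. unfold spl, spi in *.
  destruct (Nat.eqb_spec i 0), (Nat.eqb_spec j 0); pose proof (off_le S); lia.
Qed.

Lemma slot_piece_base : forall S, SD_ok S -> forall i, (i + off S < pred (sm S))%nat ->
  (sg S (spi S i) + (Datatypes.S (spi S i) - spl S i) <= bs S \/ Datatypes.S (bs S) <= sg S (spi S i))%nat.
Proof.
  intros S HS i Hi. pose proof (spl_spi S i).
  pose proof (nat_int_disj (sg S (spi S i)) (Datatypes.S (spi S i) - spl S i) (bs S) 1) as HH.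
  destruct HH; try lia.
  intros k K1 K2. destruct (slot_img S HS i k Hi K1) as [p [Hp Ep]].
  assert (Hk : k = bs S) by lia. rewrite Ep in Hk.
  apply (sg_ne_b S HS p); try lia; auto.
Qed.

Lemma kind3 : forall S, SD_ok S -> forall i, (i < sm S + 1 - off S)%nat ->
  (i + off S < pred (sm S))%nat \/ (i + off S = pred (sm S))%nat \/ (i + off S = sm S)%nat.
Proof. intros S HS i Hi. pose proof (off_le S). pose proof HS as (H1&_). lia. Qed.

Lemma INR_Ls_inj : forall S, SD_ok S -> forall a b, INR a * Ls S = INR b * Ls S -> a = b.
Proof.
  intros S HS a b E. pose proof (Ls_pos S HS). apply INR_eq. apply (Rmult_eq_reg_r (Ls S)); lra.
Qed.

Lemma d01_nat : forall S, SD_ok S -> forall a b, dist_nat (sm S) a b ->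
  distinct01 (INR a * Ls S) (INR b * Ls S).
Proof.
  intros S HS a b (H1&H2&H3). pose proof (Ls_m S HS). unfold distinct01. repeat split.
  - intro E. apply H1. apply (INR_Ls_inj S HS). auto.
  - intro E. apply H2. apply (INR_Ls_inj S HS). rewrite plus_INR. lra.
  - intro E. apply H3. apply (INR_Ls_inj S HS). rewrite plus_INR. lra.
Qed.

Lemma not_int_01 : forall (z : Z), 0 < IZR z < 1 -> False.
Proof.
  intros z [H1 H2]. apply lt_IZR in H1. apply lt_IZR in H2. lia.
Qed.

Lemma d01_beta : forall S, SD_ok S -> forall b k,
  distinct01 (INR b * Ls S + bes S) (INR k * Ls S) /\ distinct01 (INR k * Ls S) (INR b * Ls S + bes S).
Proof.
  intros S HS b k. pose proof (Ls_m S HS). pose proof (Ls_pos S HS). pose proof alpha0_range.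
  assert (Hc : forall c : Z, alpha0 * Ls S <> IZR c * Ls S).
  { intros c E. apply Rmult_eq_reg_r in E; [|lra]. apply (not_int_01 c). lra. }
  assert (Hb : INR b = IZR (Z.of_nat b)) by apply INR_IZR_INZ.
  assert (Hk : INR k = IZR (Z.of_nat k)) by apply INR_IZR_INZ.
  assert (Hm : INR (sm S) = IZR (Z.of_nat (sm S))) by apply INR_IZR_INZ.
  unfold bes, distinct01. repeat split; intro E.
  - apply (Hc (Z.of_nat k - Z.of_nat b)%Z). rewrite minus_IZR, <- Hb, <- Hk. lra.
  - apply (Hc (Z.of_nat (sm S) + Z.of_nat k - Z.of_nat b)%Z).
    rewrite minus_IZR, plus_IZR, <- Hb, <- Hk, <- Hm. lra.
  - apply (Hc (Z.of_nat k - Z.of_nat (sm S) - Z.of_nat b)%Z).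
    rewrite !minus_IZR, <- Hb, <- Hk, <- Hm. lra.
  - apply (Hc (Z.of_nat k - Z.of_nat b)%Z). rewrite minus_IZR, <- Hb, <- Hk. lra.
  - apply (Hc (Z.of_nat k - Z.of_nat (sm S) - Z.of_nat b)%Z).
    rewrite !minus_IZR, <- Hb, <- Hk, <- Hm. lra.
  - apply (Hc (Z.of_nat (sm S) + Z.of_nat k - Z.of_nat b)%Z).
    rewrite minus_IZR, plus_IZR, <- Hb, <- Hk, <- Hm. lra.
Qed.

Lemma d01_L : forall S, SD_ok S -> forall b,
  distinct01 (INR b * Ls S) (INR b * Ls S + Ls S) /\ distinct01 (INR b * Ls S + Ls S) (INR b * Ls S).
Proof.
  intros S HS b. pose proof (Ls_pos S HS). pose proof (Ls_lt1 S HS).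
  unfold distinct01. repeat split; intro; lra.
Qed.

Lemma merged_fs : forall S, SD_ok S -> forall i, spl S i <> spi S i ->
  fs S (spi S i) = true /\ fs S (spl S i) = true /\ sg S (spl S i) = Datatypes.S (sg S (spi S i)).
Proof.
  intros S HS i E. destruct (merged_info S i E) as (->&Hm&E1&E2). rewrite E1, E2.
  pose proof HS as (_&_&_&_&H5&_). destruct (H5 Hm) as (A&B&C). auto.
Qed.

Lemma endv_slot : forall S, SD_ok S -> forall i, (i + off S < pred (sm S))%nat ->
  endv (mkD S) i = INR (endk S (spi S i)) * Ls S.
Proof.
  intros S HS i Hi. destruct (view_slot S i Hi) as (A1&A2&A3&A4).
  unfold endv, endk. simpl. rewrite A2, A3, A4. pose proof (spl_spi S i).
  destruct (Nat.eq_dec (spl S i) (spi S i)) as [E|E].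
  - rewrite E. replace (Datatypes.S (spi S i) - spi S i)%nat with 1%nat by lia.
    destruct (fs S (spi S i)); [reflexivity|]. rewrite <- Rmult_plus_distr_r, <- plus_INR. apply INR_Ls_eq. lia.
  - destruct (merged_fs S HS i E) as (F1&_). rewrite F1. reflexivity.
Qed.

Lemma startv_slot : forall S, SD_ok S -> forall i, (i + off S < pred (sm S))%nat ->
  startv (mkD S) i = INR (startk S (spl S i)) * Ls S.
Proof.
  intros S HS i Hi. destruct (view_slot S i Hi) as (A1&A2&A3&A4).
  unfold startv, startk. simpl. rewrite A2, A3, A4. pose proof (spl_spi S i).
  destruct (Nat.eq_dec (spl S i) (spi S i)) as [E|E].
  - rewrite E. replace (Datatypes.S (spi S i) - spi S i)%nat with 1%nat by lia.
    destruct (fs S (spi S i)); [|reflexivity]. rewrite <- Rmult_plus_distr_r, <- plus_INR. apply INR_Ls_eq. lia.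
  - destruct (merged_fs S HS i E) as (F1&F2&F3). rewrite F1, F2, F3.
    destruct (merged_info S i E) as (_&_&E1&E2). rewrite E2, E1.
    rewrite <- Rmult_plus_distr_r, <- plus_INR. apply INR_Ls_eq. lia.
Qed.

Lemma prevp_mkD : forall S i, prevp (mkD S) (Datatypes.S i) = i.
Proof. reflexivity. Qed.

Lemma mkD_ok : forall S, SD_ok S -> PD_ok (mkD S).
Proof.
  intros S HS. pose proof (off_le S) as Ho. pose proof HS as (H1&_).
  pose proof (Ls_pos S HS) as HL. pose proof (Ls_m S HS) as HLm. pose proof (bes_range S HS) as Hbe.
  pose proof (lenT_pos S HS) as HT. pose proof (lenT_sum S) as HTs.
  pose proof (bs_lt S HS) as Hb.
  assert (HbL : INR (bs S) * Ls S + Ls S <= 1).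
  { rewrite <- HLm. replace (INR (bs S) * Ls S + Ls S) with (INR (Datatypes.S (bs S)) * Ls S) by (rewrite S_INR; ring).
    apply INR_Ls_le; auto. }
  assert (Hb0 : 0 <= INR (bs S) * Ls S) by (apply Rmult_le_pos; [apply pos_INR|lra]).
  unfold PD_ok. simpl.
  split; [lia|]. split.
  { unfold s_pa. destruct (Nat.ltb_spec (0 + off S) (pred (sm S))); [reflexivity|lia]. }
  split; [apply mkD_contig; auto|].
  split; [apply mkD_last; auto|].
  split.
  { intros i Hi. destruct (kind3 S HS i Hi) as [K|[K|K]].
    - destruct (view_slot S i K) as (_&A2&_). rewrite A2. apply Rmult_lt_0_compat; auto.
      apply lt_0_INR. pose proof (spl_spi S i). lia.
    - destruct (view_TL S i K) as (_&A2&_). rewrite A2. tauto.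
    - destruct (view_TR S i K ltac:(lia)) as (_&A2&_). rewrite A2. tauto. }
  split.
  { intros i Hi. destruct (kind3 S HS i Hi) as [K|[K|K]].
    - destruct (view_slot S i K) as (_&A2&A3&_). rewrite A2, A3.
      split. apply Rmult_le_pos; [apply pos_INR|lra].
      rewrite <- Rmult_plus_distr_r, <- plus_INR, <- HLm. apply INR_Ls_le; auto.
      apply (slot_img_bound S HS i K).
    - destruct (view_TL S i K) as (_&A2&A3&_). rewrite A2, A3. unfold lenTL.
      destruct (Pp S); split; lra.
    - destruct (view_TR S i K ltac:(lia)) as (_&A2&A3&_). rewrite A2, A3. unfold lenTR.
      destruct (Pp S); split; lra. }
  split.
  { intros i j Hi Hj Hne.
    destruct (kind3 S HS i Hi) as [Ki|[Ki|Ki]]; destruct (kind3 S HS j Hj) as [Kj|[Kj|Kj]];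
      try (exfalso; lia).
    - destruct (view_slot S i Ki) as (_&A2&A3&_). destruct (view_slot S j Kj) as (_&B2&B3&_).
      rewrite A2, A3, B2, B3. rewrite <- !Rmult_plus_distr_r, <- !plus_INR.
      destruct (slot_pieces_disj S HS i j Ki Kj Hne); [left|right]; apply INR_Ls_le; auto.
    - destruct (view_slot S i Ki) as (_&A2&A3&_). destruct (view_TL S j Kj) as (_&B2&B3&_).
      rewrite A2, A3, B2, B3. rewrite <- !Rmult_plus_distr_r, <- !plus_INR.
      destruct (slot_piece_base S HS i Ki) as [D|D].
      + left. eapply Rle_trans; [apply INR_Ls_le; eauto|]. destruct (Pp S); lra.
      + right. apply (INR_Ls_le S _ _ HS) in D. rewrite S_INR in D. unfold lenTL.
        destruct (Pp S); lra.
    - destruct (view_slot S i Ki) as (_&A2&A3&_). destruct (view_TR S j Kj ltac:(lia)) as (_&B2&B3&_).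
      rewrite A2, A3, B2, B3. rewrite <- !Rmult_plus_distr_r, <- !plus_INR.
      destruct (slot_piece_base S HS i Ki) as [D|D].
      + left. eapply Rle_trans; [apply INR_Ls_le; eauto|]. destruct (Pp S); lra.
      + right. apply (INR_Ls_le S _ _ HS) in D. rewrite S_INR in D. unfold lenTR.
        destruct (Pp S); lra.
    - destruct (view_TL S i Ki) as (_&A2&A3&_). destruct (view_slot S j Kj) as (_&B2&B3&_).
      rewrite A2, A3, B2, B3. rewrite <- !Rmult_plus_distr_r, <- !plus_INR.
      destruct (slot_piece_base S HS j Kj) as [D|D].
      + right. eapply Rle_trans; [apply INR_Ls_le; eauto|]. destruct (Pp S); lra.
      + left. apply (INR_Ls_le S _ _ HS) in D. rewrite S_INR in D. unfold lenTL.
        destruct (Pp S); lra.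
    - destruct (view_TL S i Ki) as (_&A2&A3&_). destruct (view_TR S j Kj ltac:(lia)) as (_&B2&B3&_).
      rewrite A2, A3, B2, B3. unfold lenTL, lenTR. destruct (Pp S); [left|right]; lra.
    - destruct (view_TR S i Ki ltac:(lia)) as (_&A2&A3&_). destruct (view_slot S j Kj) as (_&B2&B3&_).
      rewrite A2, A3, B2, B3. rewrite <- !Rmult_plus_distr_r, <- !plus_INR.
      destruct (slot_piece_base S HS j Kj) as [D|D].
      + right. eapply Rle_trans; [apply INR_Ls_le; eauto|]. destruct (Pp S); lra.
      + left. apply (INR_Ls_le S _ _ HS) in D. rewrite S_INR in D. unfold lenTR.
        destruct (Pp S); lra.
    - destruct (view_TR S i Ki ltac:(lia)) as (_&A2&A3&_). destruct (view_TL S j Kj) as (_&B2&B3&_).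
      rewrite A2, A3, B2, B3. unfold lenTL, lenTR. destruct (Pp S); [right|left]; lra. }
  intros i Hi. destruct i as [|k].
  - simpl. unfold prevp. simpl.
    destruct (view_TR S (pred (sm S + 1 - off S)) ltac:(lia) ltac:(lia)) as (_&A2&A3&A4).
    assert (E1 : endv (mkD S) (pred (sm S + 1 - off S)) = INR (bs S) * Ls S + bes S).
    { unfold endv. simpl. rewrite A2, A3, A4. unfold lenTR. destruct (Pp S); ring. }
    rewrite E1. rewrite (startv_slot S HS 0 ltac:(lia)). apply d01_beta; auto.
  - rewrite prevp_mkD. destruct (kind3 S HS (Datatypes.S k) Hi) as [K|[K|K]].
    + rewrite (endv_slot S HS k ltac:(lia)), (startv_slot S HS (Datatypes.S k) K).
      apply d01_nat; auto. rewrite spl_S.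
      replace (Datatypes.S k + off S)%nat with (Datatypes.S (spi S k)) by (unfold spi; destruct (Nat.eqb_spec k 0); lia).
      pose proof HS as (_&_&_&_&_&H6). apply H6.
      * unfold spi; destruct (Nat.eqb_spec k 0); lia.
      * intros Hm. unfold spi, off. rewrite Hm. destruct (Nat.eqb_spec k 0); lia.
    + rewrite (endv_slot S HS k ltac:(lia)).
      destruct (view_TL S (Datatypes.S k) K) as (_&A2&A3&A4).
      assert (E1 : startv (mkD S) (Datatypes.S k) = INR (bs S) * Ls S + bes S).
      { unfold startv. simpl. rewrite A2, A3, A4. unfold lenTL. destruct (Pp S); ring. }
      rewrite E1. apply d01_beta; auto.
    + destruct (view_TL S k ltac:(lia)) as (_&A2&A3&A4).
      destruct (view_TR S (Datatypes.S k) K ltac:(lia)) as (_&B2&B3&B4).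
      assert (E1 : endv (mkD S) k = if Pp S then INR (bs S) * Ls S else INR (bs S) * Ls S + Ls S).
      { unfold endv. simpl. rewrite A2, A3, A4. unfold lenTL. destruct (Pp S); ring. }
      assert (E2 : startv (mkD S) (Datatypes.S k) = if Pp S then INR (bs S) * Ls S + Ls S else INR (bs S) * Ls S).
      { unfold startv. simpl. rewrite B2, B3, B4. unfold lenTR. destruct (Pp S); ring. }
      rewrite E1, E2. destruct (d01_L S HS (bs S)). destruct (Pp S); auto.
Qed.

Definition slotform (S : SD) (p : nat) (u : R) : R :=
  if fs S p then INR (sg S p + p + 1) * Ls S - u else u + INR (sg S p) * Ls S - INR p * Ls S.

Lemma in_piece_dom : forall S, SD_ok S -> forall i u, (i < pn (mkD S))%nat ->
  pa (mkD S) i < u < pa (mkD S) i + pl (mkD S) i -> dom (pn (mkD S)) (pI (mkD S)) u.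
Proof.
  intros S HS i u Hi Hu. pose proof (mkD_ok S HS) as HD.
  exists i. split; auto. pose proof (pa_bounds _ HD i Hi).
  apply (pI_iff _ HD i u Hi); auto. unfold in_circle. split; lra.
Qed.

Lemma slot_T : forall S, SD_ok S -> forall p u, (p < pred (sm S))%nat ->
  INR p * Ls S < u < INR (Datatypes.S p) * Ls S ->
  dom (pn (mkD S)) (pI (mkD S)) u /\ Tp (mkD S) u = slotform S p u.
Proof.
  intros S HS p u Hp Hu. pose proof (mkD_ok S HS) as HD. pose proof (off_le S) as Ho.
  pose proof (Ls_pos S HS) as HL. pose proof HS as (Hm3&_).
  set (i := if Nat.leb p (off S) then 0%nat else (p - off S)%nat).
  assert (Hi1 : (spl S i <= p <= spi S i)%nat /\ (i + off S < pred (sm S))%nat).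
  { unfold i, spl, spi. destruct (Nat.leb_spec p (off S)).
    - simpl. lia.
    - destruct (Nat.eqb_spec (p - off S) 0); lia. }
  destruct Hi1 as [Hsp Hik].
  destruct (view_slot S i Hik) as (A1&A2&A3&A4).
  pose proof (spl_spi S i).
  assert (Hin : pa (mkD S) i < u < pa (mkD S) i + pl (mkD S) i).
  { simpl. rewrite A1, A2. rewrite <- Rmult_plus_distr_r, <- plus_INR.
    split.
    - apply Rle_lt_trans with (INR p * Ls S); [apply INR_Ls_le; auto; lia|lra].
    - eapply Rlt_le_trans; [apply Hu|]. apply INR_Ls_le; auto. lia. }
  assert (Hin' : (i < pn (mkD S))%nat) by (simpl; lia).
  split; [apply (in_piece_dom S HS i u Hin' Hin)|].
  rewrite (Tp_eq _ HD i u Hin' Hin). unfold pform, slotform. simpl. rewrite A1, A2, A3, A4.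
  destruct (Nat.eq_dec (spl S i) (spi S i)) as [E|E].
  - assert (spi S i = p) by lia. assert (spl S i = p) by lia. rewrite H0, H1.
    replace (Datatypes.S p - p)%nat with 1%nat by lia.
    destruct (fs S p).
    + rewrite !plus_INR. simpl. ring.
    + ring.
  - destruct (merged_fs S HS i E) as (F1&F2&F3). destruct (merged_info S i E) as (_&_&E1&E2).
    rewrite E1, E2 in *. rewrite F1.
    assert (Hp01 : p = 0%nat \/ p = 1%nat) by lia.
    destruct Hp01 as [->| ->].
    + rewrite F2, F3. rewrite !plus_INR, !S_INR. simpl. ring.
    + rewrite F1. rewrite !plus_INR, !S_INR. simpl. ring.
Qed.

Definition Psi (S : SD) (j : nat) (x : R) : R :=
  if par S j then INR (Datatypes.S (slv S j)) * Ls S - x else INR (slv S j) * Ls S + x.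

Lemma top_T : forall S, SD_ok S -> forall x, 0 < x < Ls S -> x <> Ls S - bes S ->
  dom (pn (mkD S)) (pI (mkD S)) (Psi S (pred (sm S)) x) /\
  Tp (mkD S) (Psi S (pred (sm S)) x) = Psi S 0 (rho (Ls S) (bes S) x).
Proof.
  intros S HS x Hx Hne. pose proof (mkD_ok S HS) as HD. pose proof (off_le S) as Ho.
  pose proof (Ls_pos S HS) as HL. pose proof HS as (Hm3&_&_&Htop&_). pose proof (bes_range S HS) as Hbe.
  assert (Hi1 : (pred (sm S) - off S < pn (mkD S))%nat) by (simpl; lia).
  assert (Hi2 : (sm S - off S < pn (mkD S))%nat) by (simpl; lia).
  destruct (view_TL S (pred (sm S) - off S) ltac:(lia)) as (A1&A2&A3&A4).
  destruct (view_TR S (sm S - off S) ltac:(lia) ltac:(lia)) as (B1&B2&B3&B4).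
  unfold Psi. rewrite Htop. simpl (par S 0). unfold bs in *. unfold lenTL, lenTR in *. unfold Pp in *.
  unfold rho. unfold lenTL, lenTR in *.
  replace (INR (Datatypes.S (pred (sm S))) * Ls S) with (INR (pred (sm S)) * Ls S + Ls S)
    by (rewrite S_INR; ring).
  destruct (par S (pred (sm S))) eqn:EP; rewrite ?EP in *; destruct (Rlt_dec x (Ls S - bes S)).
  - assert (Hin : pa (mkD S) (sm S - off S) < INR (pred (sm S)) * Ls S + Ls S - x <
                  pa (mkD S) (sm S - off S) + pl (mkD S) (sm S - off S)) by (simpl; rewrite B1, B2; split; lra).
    split; [apply (in_piece_dom S HS _ _ Hi2 Hin)|]. rewrite (Tp_eq _ HD _ _ Hi2 Hin).
    unfold pform. simpl. rewrite B1, B2, B3, B4. ring.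
  - assert (x > Ls S - bes S) by (destruct (Rle_lt_or_eq_dec _ _ (Rnot_lt_le _ _ n)); [lra|congruence]).
    assert (Hin : pa (mkD S) (pred (sm S) - off S) < INR (pred (sm S)) * Ls S + Ls S - x <
                  pa (mkD S) (pred (sm S) - off S) + pl (mkD S) (pred (sm S) - off S)) by (simpl; rewrite A1, A2; split; lra).
    split; [apply (in_piece_dom S HS _ _ Hi1 Hin)|]. rewrite (Tp_eq _ HD _ _ Hi1 Hin).
    unfold pform. simpl. rewrite A1, A2, A3, A4. ring.
  - assert (Hin : pa (mkD S) (pred (sm S) - off S) < INR (pred (sm S)) * Ls S + x <
                  pa (mkD S) (pred (sm S) - off S) + pl (mkD S) (pred (sm S) - off S)) by (simpl; rewrite A1, A2; split; lra).
    split; [apply (in_piece_dom S HS _ _ Hi1 Hin)|]. rewrite (Tp_eq _ HD _ _ Hi1 Hin).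
    unfold pform. simpl. rewrite A1, A2, A3, A4. ring.
  - assert (x > Ls S - bes S) by (destruct (Rle_lt_or_eq_dec _ _ (Rnot_lt_le _ _ n)); [lra|congruence]).
    assert (Hin : pa (mkD S) (sm S - off S) < INR (pred (sm S)) * Ls S + x <
                  pa (mkD S) (sm S - off S) + pl (mkD S) (sm S - off S)) by (simpl; rewrite B1, B2; split; lra).
    split; [apply (in_piece_dom S HS _ _ Hi2 Hin)|]. rewrite (Tp_eq _ HD _ _ Hi2 Hin).
    unfold pform. simpl. rewrite B1, B2, B3, B4. ring.
Qed.

Lemma Psi_step : forall S, SD_ok S -> forall j x, (j < pred (sm S))%nat -> 0 < x < Ls S ->
  dom (pn (mkD S)) (pI (mkD S)) (Psi S j x) /\ Tp (mkD S) (Psi S j x) = Psi S (Datatypes.S j) x.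
Proof.
  intros S HS j x Hj Hx. pose proof HS as (Hm3&H2&H3&Htop&_).
  set (p := slv S j).
  assert (Hp : (p < pred (sm S))%nat).
  { destruct (H2 j ltac:(lia)) as [Hl _].
    destruct (Nat.eq_dec p (pred (sm S))) as [E|]; [|unfold p in *; lia].
    exfalso. unfold p in E. rewrite <- Htop in E. apply (slv_inj S HS) in E; lia. }
  assert (Hu : INR p * Ls S < Psi S j x < INR (Datatypes.S p) * Ls S).
  { unfold Psi. fold p. rewrite S_INR. destruct (par S j); split; lra. }
  destruct (slot_T S HS p (Psi S j x) Hp Hu) as [Hd HT]. split; auto. rewrite HT.
  assert (Hsg : sg S p = slv S (Datatypes.S j)) by (unfold sg, p; rewrite (proj2 (H2 j ltac:(lia))); reflexivity).
  assert (Hfs : fs S p = so S j) by (unfold fs, p; rewrite (proj2 (H2 j ltac:(lia))); reflexivity).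
  unfold slotform, Psi. rewrite Hfs, Hsg. fold p. simpl (par S (Datatypes.S j)).
  destruct (par S j), (so S j); cbn [xorb]; rewrite ?plus_INR, ?S_INR; try change (INR 0) with 0; ring.
Qed.

Lemma Psi_fwd : forall S, SD_ok S -> forall j x, (j < sm S)%nat -> 0 < x < Ls S ->
  fwd (dom (pn (mkD S)) (pI (mkD S))) (Tp (mkD S)) j (Psi S 0 x) (Psi S j x).
Proof.
  intros S HS j x Hj Hx. induction j as [|j IH].
  - reflexivity.
  - simpl. exists (Psi S j x). destruct (Psi_step S HS j x ltac:(lia) Hx) as [Hd HT].
    split; [apply IH; lia|]. split; auto.
Qed.

Lemma Psi_top : forall S, SD_ok S -> forall x, 0 < x < Ls S -> x <> Ls S - bes S ->
  fwd (dom (pn (mkD S)) (pI (mkD S))) (Tp (mkD S)) (sm S) (Psi S 0 x) (Psi S 0 (rho (Ls S) (bes S) x)).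
Proof.
  intros S HS x Hx Hne. pose proof HS as (Hm3&_).
  replace (sm S) with (Datatypes.S (pred (sm S))) by lia. simpl.
  exists (Psi S (pred (sm S)) x). destruct (top_T S HS x Hx Hne) as [Hd HT].
  split; [apply Psi_fwd; auto; lia|]. split; auto.
Qed.

Lemma Psi_cover : forall S, SD_ok S -> forall y eps, in_circle y -> 0 < eps ->
  exists j x, (j < sm S)%nat /\ 0 < x < Ls S /\ cdist y (Psi S j x) < eps.
Proof.
  intros S HS y eps Hy He. pose proof HS as (Hm3&H2&H3&_). pose proof (Ls_pos S HS) as HL.
  pose proof (Ls_m S HS) as HLm. unfold in_circle in Hy.
  destruct (nat_floor (y * INR (sm S))) as [p Hp].
  { apply Rmult_le_pos; [lra|apply pos_INR]. }
  assert (Hp' : INR p * Ls S <= y < INR p * Ls S + Ls S).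
  { destruct Hp as [Hp1 Hp2]. split.
    - apply (Rmult_le_compat_r (Ls S)) in Hp1; [|lra]. rewrite Rmult_assoc, HLm in Hp1. lra.
    - apply (Rmult_lt_compat_r (Ls S)) in Hp2; [|lra]. rewrite Rmult_assoc, HLm in Hp2. lra. }
  assert (Hpm : (p < sm S)%nat).
  { destruct (Nat.lt_ge_cases p (sm S)); auto. apply le_INR in H.
    assert (INR (sm S) * Ls S <= INR p * Ls S) by (apply Rmult_le_compat_r; lra). lra. }
  set (j := slvi S p). destruct (H3 p Hpm) as [Hj Hjp]. fold j in Hj, Hjp.
  set (h := Rmin (eps / 2) (Ls S / 4)).
  assert (0 < h) by (unfold h; apply Rmin_glb_lt; lra).
  assert (h <= eps / 2) by apply Rmin_l. assert (h <= Ls S / 4) by apply Rmin_r.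
  set (y' := if Rlt_dec y (INR p * Ls S + Ls S / 2) then y + h else y - h).
  assert (Hy' : INR p * Ls S < y' < INR p * Ls S + Ls S /\ Rabs (y - y') <= h).
  { unfold y'. destruct Rlt_dec.
    - split; [split; lra|]. replace (y - (y + h)) with (-h) by ring. rewrite Rabs_Ropp, Rabs_right; lra.
    - split; [split; lra|]. replace (y - (y - h)) with h by ring. rewrite Rabs_right; lra. }
  exists j, (if par S j then INR p * Ls S + Ls S - y' else y' - INR p * Ls S).
  split; auto. split.
  - destruct (par S j); split; lra.
  - assert (Psi S j (if par S j then INR p * Ls S + Ls S - y' else y' - INR p * Ls S) = y').
    { unfold Psi. rewrite Hjp. rewrite S_INR. destruct (par S j); ring. }
    rewrite H4. eapply Rle_lt_trans; [apply cdist_le_abs|]. lra.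
Qed.

Lemma SD_in_C : forall S, SD_ok S -> in_C (sm S + 1 - off S) (flipcount (mkD S)) (Tp (mkD S)).
Proof.
  intros S HS. pose proof (mkD_ok S HS) as HD. exists (pI (mkD S)).
  split; [apply (PD_isCET _ HD)|]. split; [|apply (PD_flips _ HD)].
  pose proof HS as (Hm3&H2&H3&Htop&_).
  apply (tower_transitive _ _ (sm S) (Ls S) alpha0 (Psi S)).
  - pose proof (Ls_lt1 S HS). pose proof (Ls_pos S HS). split; lra.
  - apply alpha0_range.
  - apply alpha0_irr.
  - lia.
  - intros x Hx. unfold Psi. simpl. pose proof (bs_lt S HS). unfold bs in H.
    pose proof (INR_Ls_le S (Datatypes.S (slv S 0)) (sm S) HS ltac:(lia)). rewrite S_INR in H0.
    rewrite (Ls_m S HS) in H0. pose proof (pos_INR (slv S 0)). pose proof (Ls_pos S HS).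
    assert (0 <= INR (slv S 0) * Ls S) by (apply Rmult_le_pos; lra).
    unfold in_circle. split; lra.
  - intros x Hx Hne. apply Psi_top; auto.
  - intros j x Hj Hx. apply Psi_fwd; auto.
  - intros j x y Hj. unfold Psi. destruct (par S j).
    + replace (INR (Datatypes.S (slv S j)) * Ls S - x - (INR (Datatypes.S (slv S j)) * Ls S - y)) with (- (x - y)) by ring.
      apply Rabs_Ropp.
    + f_equal. ring.
  - apply Psi_cover; auto.
Qed.

Definition cnt (f : nat -> bool) (a k : nat) : nat := length (filter f (seq a k)).

Lemma cnt_S : forall f a k, cnt f a (Datatypes.S k) = (cnt f a k + if f (a + k)%nat then 1 else 0)%nat.
Proof.
  intros. unfold cnt. rewrite seq_S, filter_app, length_app. simpl. destruct (f (a + k)%nat); reflexivity.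
Qed.

Lemma cnt_0 : forall f a, cnt f a 0 = 0%nat.
Proof. reflexivity. Qed.

Lemma cnt_ext : forall f g a k, (forall i, (a <= i < a + k)%nat -> f i = g i) -> cnt f a k = cnt g a k.
Proof.
  intros f g a k H. induction k as [|k IH]; [reflexivity|].
  rewrite !cnt_S, IH by (intros; apply H; lia). rewrite H by lia. reflexivity.
Qed.

Lemma cnt_shift : forall f a c k, cnt (fun i => f (i + c)%nat) a k = cnt f (a + c) k.
Proof.
  intros f a c k. induction k as [|k IH]; [reflexivity|].
  rewrite !cnt_S, IH. replace (a + k + c)%nat with (a + c + k)%nat by lia. reflexivity.
Qed.

Lemma cnt_split : forall f a k1 k2, cnt f a (k1 + k2) = (cnt f a k1 + cnt f (a + k1) k2)%nat.
Proof.
  intros f a k1 k2. induction k2 as [|k2 IH].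
  - rewrite Nat.add_0_r, cnt_0, Nat.add_0_r. reflexivity.
  - replace (k1 + Datatypes.S k2)%nat with (Datatypes.S (k1 + k2)) by lia.
    rewrite !cnt_S, IH. replace (a + (k1 + k2))%nat with (a + k1 + k2)%nat by lia. lia.
Qed.

Lemma par_cnt : forall S j, par S j = Nat.odd (cnt (so S) 0 j).
Proof.
  intros S j. induction j as [|j IH]; [reflexivity|].
  simpl par. rewrite IH, cnt_S. simpl (0 + j)%nat.
  destruct (so S j); rewrite ?Nat.add_0_r; [|destruct (Nat.odd _); reflexivity].
  rewrite Nat.add_1_r, Nat.odd_succ, <- Nat.negb_odd. destruct (Nat.odd _); reflexivity.
Qed.

Lemma filter_perm_len : forall (f : nat -> bool) l l', Permutation l l' -> length (filter f l) = length (filter f l').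
Proof.
  intros f l l' H. induction H; simpl; auto.
  - destruct (f x); simpl; auto.
  - destruct (f x), (f y); reflexivity.
  - congruence.
Qed.

Lemma filter_map_len : forall (f : nat -> bool) (g : nat -> nat) l,
  length (filter f (map g l)) = length (filter (fun x => f (g x)) l).
Proof. intros. induction l; simpl; auto. destruct (f (g a)); simpl; auto. Qed.

Lemma cnt_slots_levels : forall S, SD_ok S ->
  cnt (fs S) 0 (pred (sm S)) = cnt (so S) 0 (pred (sm S)).
Proof.
  intros S HS. pose proof HS as (Hm3&H2&H3&Htop&_).
  unfold cnt, fs. rewrite <- (filter_map_len (so S) (slvi S)).
  apply filter_perm_len. apply NoDup_Permutation.
  - apply NoDup_map_NoDup_ForallPairs; [|apply seq_NoDup].
    intros x y Hx Hy E. apply in_seq in Hx. apply in_seq in Hy.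
    rewrite <- (proj2 (H3 x ltac:(lia))), <- (proj2 (H3 y ltac:(lia))), E. reflexivity.
  - apply seq_NoDup.
  - intros x. rewrite in_map_iff. split.
    + intros [p [E Hp]]. apply in_seq in Hp. apply in_seq. subst x.
      pose proof (slvi_nontop S HS p ltac:(lia) ltac:(lia)). lia.
    + intros Hx. apply in_seq in Hx. exists (slv S x). split; [apply (proj2 (H2 x ltac:(lia)))|].
      apply in_seq. destruct (H2 x ltac:(lia)) as [Hl _]. split; [lia|].
      destruct (Nat.eq_dec (slv S x) (pred (sm S))) as [E|]; [|lia].
      rewrite <- Htop in E. apply (slv_inj S HS) in E; lia.
Qed.

Lemma flipcount_formula : forall S, SD_ok S ->
  (flipcount (mkD S) + off S = cnt (so S) 0 (pred (sm S)) + (if Pp S then 2 else 0))%nat.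
Proof.
  intros S HS. pose proof HS as (Hm3&_&_&_&H5&_). pose proof (off_le S) as Ho.
  rewrite <- (cnt_slots_levels S HS).
  unfold flipcount. simpl. fold (cnt (s_pf S) 0 (sm S + 1 - off S)).
  replace (sm S + 1 - off S)%nat with ((pred (sm S) - off S) + 2)%nat by lia.
  rewrite cnt_split. simpl (0 + _)%nat.
  assert (E2 : cnt (s_pf S) (pred (sm S) - off S) 2 = if Pp S then 2%nat else 0%nat).
  { unfold cnt. simpl. unfold s_pf.
    destruct (Nat.ltb_spec (pred (sm S) - off S + off S) (pred (sm S))); [lia|].
    destruct (Nat.ltb_spec (Datatypes.S (pred (sm S) - off S) + off S) (pred (sm S))); [lia|].
    destruct (Pp S); reflexivity. }
  rewrite E2.
  assert (E1 : cnt (s_pf S) 0 (pred (sm S) - off S) = cnt (fun i => fs S (spi S i)) 0 (pred (sm S) - off S)).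
  { apply cnt_ext. intros i Hi. unfold s_pf. destruct (Nat.ltb_spec (i + off S) (pred (sm S))); [reflexivity|lia]. }
  rewrite E1.
  unfold off in *. destruct (smg S) eqn:Em.
  - destruct (H5 eq_refl) as (F0&F1&_).
    replace (pred (sm S) - 1)%nat with (1 + (pred (sm S) - 2))%nat by lia.
    replace (pred (sm S)) with (2 + (pred (sm S) - 2))%nat at 2 by lia.
    rewrite !cnt_split. simpl (0 + 1)%nat. simpl (0 + 2)%nat.
    assert (cnt (fun i => fs S (spi S i)) 1 (pred (sm S) - 2) = cnt (fs S) 2 (pred (sm S) - 2)).
    { rewrite <- (cnt_shift (fs S) 1 1). apply cnt_ext. intros i Hi. unfold spi, off.
      rewrite Em. destruct (Nat.eqb_spec i 0); [lia|reflexivity]. }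
    rewrite H. unfold cnt at 1 3. simpl. unfold spi, off. rewrite Em. simpl. rewrite F0, F1. simpl. lia.
  - rewrite Nat.sub_0_r, !Nat.add_0_r.
    f_equal. apply cnt_ext. intros i Hi. unfold spi, off. rewrite Em. destruct (Nat.eqb_spec i 0); subst; [reflexivity|rewrite Nat.add_0_r; reflexivity].
Qed.
Local Open Scope bool_scope.

Definition dist_natb (m a b : nat) : bool :=
  negb (Nat.eqb a b) && negb (Nat.eqb a (b + m)) && negb (Nat.eqb b (a + m)).

Definition SD_chk (S : SD) : bool :=
  Nat.leb 3 (sm S) &&
  forallb (fun j => Nat.ltb (slv S j) (sm S) && Nat.eqb (slvi S (slv S j)) j) (seq 0 (sm S)) &&
  forallb (fun p => Nat.ltb (slvi S p) (sm S) && Nat.eqb (slv S (slvi S p)) p) (seq 0 (sm S)) &&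
  Nat.eqb (slv S (pred (sm S))) (pred (sm S)) &&
  (if smg S then fs S 0 && fs S 1 && Nat.eqb (sg S 0) (Datatypes.S (sg S 1)) else true) &&
  forallb (fun p => if Nat.ltb (Datatypes.S p) (pred (sm S)) && (negb (smg S) || negb (Nat.eqb p 0))
                    then dist_natb (sm S) (endk S p) (startk S (Datatypes.S p)) else true) (seq 0 (sm S)).

Lemma SD_chk_ok : forall S, SD_chk S = true -> SD_ok S.
Proof.
  intros S H. unfold SD_chk in H.
  repeat rewrite Bool.andb_true_iff in H. destruct H as (((((H1&H2)&H3)&H4)&H5)&H6).
  split; [apply Nat.leb_le; auto|].
  split.
  { intros j Hj. rewrite forallb_forall in H2. specialize (H2 j ltac:(apply in_seq; lia)).
    apply Bool.andb_true_iff in H2. destruct H2 as [A B]. apply Nat.ltb_lt in A. apply Nat.eqb_eq in B. auto. }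
  split.
  { intros p Hp. rewrite forallb_forall in H3. specialize (H3 p ltac:(apply in_seq; lia)).
    apply Bool.andb_true_iff in H3. destruct H3 as [A B]. apply Nat.ltb_lt in A. apply Nat.eqb_eq in B. auto. }
  split; [apply Nat.eqb_eq; auto|].
  split.
  { intros Hm. rewrite Hm in H5. repeat rewrite Bool.andb_true_iff in H5. destruct H5 as ((A&B)&C).
    apply Nat.eqb_eq in C. auto. }
  intros p Hp Hm. rewrite forallb_forall in H6. assert (Hps : In p (seq 0 (sm S))) by (apply in_seq; lia).
  specialize (H6 p Hps).
  assert (Hc : (Nat.ltb (Datatypes.S p) (pred (sm S)) && (negb (smg S) || negb (Nat.eqb p 0)))%bool = true).
  { apply Bool.andb_true_iff. split; [apply Nat.ltb_lt; auto|].
    destruct (smg S); simpl; auto. destruct (Nat.eqb_spec p 0); auto. exfalso; apply Hm; auto. }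
  rewrite Hc in H6. unfold dist_natb in H6. repeat rewrite Bool.andb_true_iff in H6.
  destruct H6 as ((A&B)&C). apply Bool.negb_true_iff in A, B, C.
  apply Nat.eqb_neq in A, B, C. unfold dist_nat. auto.
Qed.

Lemma use_SD : forall S n f, SD_chk S = true -> (sm S + 1 - off S)%nat = n -> flipcount (mkD S) = f ->
  exists T, in_C n f T.
Proof.
  intros S n f H1 H2 H3. exists (Tp (mkD S)). rewrite <- H2, <- H3. apply SD_in_C, SD_chk_ok, H1.
Qed.

Definition SDL (l li : list nat) (o : list bool) (mg : bool) : SD :=
  mkSD (length l) (fun j => nth j l 0%nat) (fun p => nth p li 0%nat) (fun j => nth j o false) mg.

Lemma small_cases : forall n f, (4 <= n <= 8)%nat -> (1 <= f <= n)%nat -> exists T, in_C n f T.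
Proof.
  intros n f Hn Hf.
  assert (n = 4 \/ n = 5 \/ n = 6 \/ n = 7 \/ n = 8)%nat as Hn' by lia.
  destruct Hn' as [->|[->|[->|[->| ->]]]];
  (assert (f = 1 \/ f = 2 \/ f = 3 \/ f = 4 \/ f = 5 \/ f = 6 \/ f = 7 \/ f = 8)%nat as Hf' by lia);
  destruct Hf' as [->|[->|[->|[->|[->|[->|[->| ->]]]]]]]; try (exfalso; lia).
  - apply (use_SD (SDL [1; 2; 0; 3]%nat [2; 0; 1; 3]%nat [true; false; true] true)); vm_compute; reflexivity.
  - apply (use_SD (SDL [0; 1; 2]%nat [0; 1; 2]%nat [true; true] false)); vm_compute; reflexivity.
  - apply (use_SD (SDL [0; 1; 2]%nat [0; 1; 2]%nat [false; true] false)); vm_compute; reflexivity.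
  - apply (use_SD (SDL [1; 2; 0; 3]%nat [2; 0; 1; 3]%nat [true; true; true] true)); vm_compute; reflexivity.
  - apply (use_SD (SDL [0; 3; 1; 2; 4]%nat [0; 2; 3; 1; 4]%nat [true; false; true; false] true)); vm_compute; reflexivity.
  - apply (use_SD (SDL [0; 1; 2; 3]%nat [0; 1; 2; 3]%nat [false; true; true] false)); vm_compute; reflexivity.
  - apply (use_SD (SDL [0; 1; 2; 3]%nat [0; 1; 2; 3]%nat [false; true; false] false)); vm_compute; reflexivity.
  - apply (use_SD (SDL [0; 3; 1; 2; 4]%nat [0; 2; 3; 1; 4]%nat [true; false; true; true] true)); vm_compute; reflexivity.
  - apply (use_SD (SDL [0; 1; 2; 3]%nat [0; 1; 2; 3]%nat [true; true; true] false)); vm_compute; reflexivity.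
  - apply (use_SD (SDL [0; 3; 1; 2; 4; 5]%nat [0; 2; 3; 1; 4; 5]%nat [true; false; true; false; false] true)); vm_compute; reflexivity.
  - apply (use_SD (SDL [0; 1; 2; 3; 4]%nat [0; 1; 2; 3; 4]%nat [false; true; false; true] false)); vm_compute; reflexivity.
  - apply (use_SD (SDL [0; 1; 3; 2; 4]%nat [0; 1; 3; 2; 4]%nat [false; false; false; true] false)); vm_compute; reflexivity.
  - apply (use_SD (SDL [0; 1; 2; 3; 4]%nat [0; 1; 2; 3; 4]%nat [true; true; true; true] false)); vm_compute; reflexivity.
  - apply (use_SD (SDL [0; 1; 2; 3; 4]%nat [0; 1; 2; 3; 4]%nat [false; true; true; true] false)); vm_compute; reflexivity.
  - apply (use_SD (SDL [0; 3; 1; 2; 4; 5]%nat [0; 2; 3; 1; 4; 5]%nat [true; true; true; true; true] true)); vm_compute; reflexivity.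
  - apply (use_SD (SDL [0; 3; 1; 2; 5; 4; 6]%nat [0; 2; 3; 1; 5; 4; 6]%nat [true; false; true; false; false; false] true)); vm_compute; reflexivity.
  - apply (use_SD (SDL [0; 1; 2; 3; 4; 5]%nat [0; 1; 2; 3; 4; 5]%nat [false; true; false; true; false] false)); vm_compute; reflexivity.
  - apply (use_SD (SDL [0; 1; 3; 2; 4; 5]%nat [0; 1; 3; 2; 4; 5]%nat [false; false; false; true; false] false)); vm_compute; reflexivity.
  - apply (use_SD (SDL [0; 1; 2; 3; 4; 5]%nat [0; 1; 2; 3; 4; 5]%nat [false; true; true; true; true] false)); vm_compute; reflexivity.
  - apply (use_SD (SDL [0; 1; 2; 3; 4; 5]%nat [0; 1; 2; 3; 4; 5]%nat [false; true; false; true; true] false)); vm_compute; reflexivity.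
  - apply (use_SD (SDL [0; 3; 1; 2; 4; 5; 6]%nat [0; 2; 3; 1; 4; 5; 6]%nat [true; false; true; true; true; true] true)); vm_compute; reflexivity.
  - apply (use_SD (SDL [0; 1; 2; 3; 4; 5]%nat [0; 1; 2; 3; 4; 5]%nat [true; true; true; true; true] false)); vm_compute; reflexivity.
  - apply (use_SD (SDL [0; 3; 1; 2; 5; 4; 6; 7]%nat [0; 2; 3; 1; 5; 4; 6; 7]%nat [true; false; true; false; false; false; false] true)); vm_compute; reflexivity.
  - apply (use_SD (SDL [0; 1; 2; 3; 5; 4; 6]%nat [0; 1; 2; 3; 5; 4; 6]%nat [false; true; false; false; false; true] false)); vm_compute; reflexivity.
  - apply (use_SD (SDL [0; 1; 2; 4; 5; 3; 6]%nat [0; 1; 2; 5; 3; 4; 6]%nat [false; true; false; false; false; false] false)); vm_compute; reflexivity.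
  - apply (use_SD (SDL [0; 1; 2; 3; 4; 5; 6]%nat [0; 1; 2; 3; 4; 5; 6]%nat [false; true; false; true; true; true] false)); vm_compute; reflexivity.
  - apply (use_SD (SDL [0; 1; 2; 3; 4; 5; 6]%nat [0; 1; 2; 3; 4; 5; 6]%nat [false; true; false; true; false; true] false)); vm_compute; reflexivity.
  - apply (use_SD (SDL [0; 1; 2; 3; 4; 5; 6]%nat [0; 1; 2; 3; 4; 5; 6]%nat [true; true; true; true; true; true] false)); vm_compute; reflexivity.
  - apply (use_SD (SDL [0; 1; 2; 3; 4; 5; 6]%nat [0; 1; 2; 3; 4; 5; 6]%nat [false; true; true; true; true; true] false)); vm_compute; reflexivity.
  - apply (use_SD (SDL [0; 3; 1; 2; 4; 5; 6; 7]%nat [0; 2; 3; 1; 4; 5; 6; 7]%nat [true; true; true; true; true; true; true] true)); vm_compute; reflexivity.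
Qed.

Fixpoint finv (f : nat -> nat) (p : nat) (k : nat) : nat :=
  match k with O => 0%nat | Datatypes.S k' => if Nat.eqb (f k') p then k' else finv f p k' end.

Lemma finv_spec : forall f p k j, (j < k)%nat -> f j = p ->
  (forall a b, (a < k)%nat -> (b < k)%nat -> f a = f b -> a = b) -> finv f p k = j.
Proof.
  intros f p k. induction k as [|k IH]; intros j Hj Hf Hinj; [lia|].
  simpl. destruct (Nat.eqb_spec (f k) p).
  - apply Hinj; [lia|lia|congruence].
  - destruct (Nat.eq_dec j k) as [->|]; [congruence|]. apply IH; [lia|auto|].
    intros a b Ha Hb. apply Hinj; lia.
Qed.

Lemma cnt_all : forall f a k, (forall i, (a <= i < a + k)%nat -> f i = true) -> cnt f a k = k.
Proof.
  intros f a k H. induction k as [|k IH]; [reflexivity|].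
  rewrite cnt_S, IH by (intros; apply H; lia). rewrite H by lia. lia.
Qed.

Lemma cnt_none : forall f a k, (forall i, (a <= i < a + k)%nat -> f i = false) -> cnt f a k = 0%nat.
Proof.
  intros f a k H. induction k as [|k IH]; [reflexivity|].
  rewrite cnt_S, IH by (intros; apply H; lia). rewrite H by lia. lia.
Qed.

Definition Ifam (m : nat) : SD := mkSD m (fun j => j) (fun p => p) (fun _ => true) false.

Lemma Ifam_ok : forall m, (3 <= m)%nat -> SD_ok (Ifam m).
Proof.
  intros m Hm. unfold SD_ok, Ifam. simpl. split; [auto|]. split; [intros; split; auto|].
  split; [intros; split; auto|]. split; [auto|]. split; [intros H; discriminate|].
  intros p Hp _. unfold dist_nat, endk, startk, fs, sg. simpl. lia.
Qed.

Lemma Ifam_case : forall m, (3 <= m)%nat -> Nat.even m = true -> exists T, in_C (m + 1) (m + 1) T.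
Proof.
  intros m Hm He. pose proof (SD_in_C (Ifam m) (Ifam_ok m Hm)) as H.
  pose proof (flipcount_formula (Ifam m) (Ifam_ok m Hm)) as F.
  unfold off in F, H. simpl in F, H. rewrite Nat.sub_0_r in H.
  rewrite cnt_all in F by auto. unfold Pp in F. rewrite par_cnt in F. rewrite cnt_all in F by auto.
  simpl in F.
  assert (Nat.odd (pred m) = true).
  { destruct m as [|m']; [lia|]. simpl. rewrite <- Nat.negb_even. rewrite Nat.even_succ in He.
    rewrite <- Nat.negb_odd, He. reflexivity. }
  rewrite H0 in F. assert (flipcount (mkD (Ifam m)) = m + 1)%nat by lia.
  rewrite H1 in H. eauto.
Qed.

Ltac dcase := repeat (match goal with
 | |- context [Nat.eqb ?a ?b] => destruct (Nat.eqb_spec a b)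
 | |- context [Nat.ltb ?a ?b] => destruct (Nat.ltb_spec a b)
 | H : context [Nat.eqb ?a ?b] |- _ => destruct (Nat.eqb_spec a b)
 | H : context [Nat.ltb ?a ?b] |- _ => destruct (Nat.ltb_spec a b)
 end; cbv beta iota in *).

Definition Kslv (m j : nat) : nat :=
  if Nat.eqb j 0 then 0 else if Nat.eqb j 1 then 3 else if Nat.eqb j (m-1) then (m-1)%nat
  else if Nat.eqb j (m-2) then 2%nat else if Nat.eqb j (m-3) then 1%nat
  else if Nat.ltb (2*j) (m-1) then (2*j)%nat else (2*m-3-2*j)%nat.

Definition lev (m p : nat) : nat :=
  if Nat.eqb p 0 then 0 else if Nat.eqb p 1 then (m-3)%nat else if Nat.eqb p 2 then (m-2)%nat
  else if Nat.eqb p 3 then 1%nat else if Nat.eqb p (m-1) then (m-1)%nat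
  else if Nat.even p then Nat.div2 p else (m - 2 - Nat.div2 p)%nat.

Lemma Kslv_range : forall m j, (8 <= m)%nat -> (j < m)%nat -> (Kslv m j < m)%nat.
Proof. intros m j Hm Hj. unfold Kslv. dcase; lia. Qed.

Lemma Kslv_inj : forall m a b, (8 <= m)%nat -> (a < m)%nat -> (b < m)%nat -> Kslv m a = Kslv m b -> a = b.
Proof. intros m a b Hm Ha Hb E. unfold Kslv in E. dcase; lia. Qed.

Lemma lev_even : forall m k, (4 <= 2*k < m-1)%nat -> lev m (2*k) = k.
Proof.
  intros m k H. unfold lev. dcase; try lia.
  rewrite Nat.even_mul. simpl Nat.even. cbv beta iota. rewrite Nat.div2_double. reflexivity.
Qed.

Lemma lev_odd : forall m k, (5 <= 2*k+1 < m-1)%nat -> lev m (2*k+1) = (m - 2 - k)%nat.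
Proof.
  intros m k H. unfold lev. dcase; try lia.
  replace (2*k+1)%nat with (Datatypes.S (2*k)) by lia.
  rewrite Nat.even_succ, Nat.odd_mul. simpl Nat.odd. cbv beta iota. rewrite Nat.div2_succ_double. reflexivity.
Qed.

Lemma Kslv_lev : forall m p, (8 <= m)%nat -> (p < m)%nat -> (lev m p < m)%nat /\ Kslv m (lev m p) = p.
Proof.
  intros m p Hm Hp.
  destruct (Nat.eq_dec p 0) as [->|]; [unfold lev, Kslv; simpl; lia|].
  destruct (Nat.eq_dec p 1) as [->|]; [unfold lev, Kslv; dcase; lia|].
  destruct (Nat.eq_dec p 2) as [->|]; [unfold lev, Kslv; dcase; lia|].
  destruct (Nat.eq_dec p 3) as [->|]; [unfold lev, Kslv; dcase; lia|].
  destruct (Nat.eq_dec p (m-1)) as [->|]; [unfold lev, Kslv; dcase; lia|].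
  destruct (Nat.Even_or_Odd p) as [[k ->]|[k ->]].
  - rewrite lev_even by lia. unfold Kslv. dcase; lia.
  - rewrite lev_odd by lia. unfold Kslv. dcase; lia.
Qed.

Definition Kfam (m : nat) (o : nat -> bool) (mg : bool) : SD :=
  mkSD m (Kslv m) (fun p => finv (Kslv m) p m) o mg.

Lemma Kslvi_eq : forall m o mg p, (8 <= m)%nat -> (p < m)%nat -> slvi (Kfam m o mg) p = lev m p.
Proof.
  intros m o mg p Hm Hp. simpl. destruct (Kslv_lev m p Hm Hp) as [H1 H2].
  apply finv_spec; auto. intros a b Ha Hb. apply Kslv_inj; auto.
Qed.

Lemma Kfam_bij : forall m o mg, (8 <= m)%nat ->
  (forall j, (j < m)%nat -> (slv (Kfam m o mg) j < m)%nat /\ slvi (Kfam m o mg) (slv (Kfam m o mg) j) = j) /\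
  (forall p, (p < m)%nat -> (slvi (Kfam m o mg) p < m)%nat /\ slv (Kfam m o mg) (slvi (Kfam m o mg) p) = p).
Proof.
  intros m o mg Hm. split.
  - intros j Hj. pose proof (Kslv_range m j Hm Hj). split; [simpl; auto|].
    rewrite (Kslvi_eq m o mg) by (simpl; auto). simpl.
    destruct (Kslv_lev m (Kslv m j) Hm H) as [A B]. apply (Kslv_inj m); auto.
  - intros p Hp. rewrite (Kslvi_eq m o mg) by auto. simpl. apply Kslv_lev; auto.
Qed.

Lemma Ksg : forall m o mg p, (8 <= m)%nat -> (p < m)%nat -> sg (Kfam m o mg) p = Kslv m (Datatypes.S (lev m p)).
Proof. intros. unfold sg. rewrite Kslvi_eq by auto. reflexivity. Qed.

Lemma Kfs : forall m o mg p, (8 <= m)%nat -> (p < m)%nat -> fs (Kfam m o mg) p = o (lev m p).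
Proof. intros. unfold fs. rewrite Kslvi_eq by auto. reflexivity. Qed.

Definition far (m a b : nat) : Prop := a <> b /\ b <> Datatypes.S a /\ a <> Datatypes.S b /\ (a < m)%nat /\ (b < m)%nat /\ a <> 0%nat /\ b <> 0%nat.

Lemma Kslv_low : forall m j, (8 <= m)%nat -> (2 <= j <= m - 4)%nat -> (2 * j < m - 1)%nat -> Kslv m j = (2 * j)%nat.
Proof. intros m j Hm Hj Hl. unfold Kslv. dcase; lia. Qed.
Lemma Kslv_high : forall m j, (8 <= m)%nat -> (2 <= j <= m - 4)%nat -> (m - 1 <= 2 * j)%nat -> Kslv m j = (2 * m - 3 - 2 * j)%nat.
Proof. intros m j Hm Hj Hl. unfold Kslv. dcase; lia. Qed.
Lemma Kslv_m1 : forall m, (8 <= m)%nat -> Kslv m (m - 1) = (m - 1)%nat.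
Proof. intros m Hm. unfold Kslv. dcase; lia. Qed.
Lemma Kslv_m2 : forall m, (8 <= m)%nat -> Kslv m (m - 2) = 2%nat.
Proof. intros m Hm. unfold Kslv. dcase; lia. Qed.
Lemma Kslv_m3 : forall m, (8 <= m)%nat -> Kslv m (m - 3) = 1%nat.
Proof. intros m Hm. unfold Kslv. dcase; lia. Qed.
Lemma lev_1 : forall m, (8 <= m)%nat -> lev m 1 = (m - 3)%nat.
Proof. intros m Hm. unfold lev. dcase; lia. Qed.
Lemma lev_2 : forall m, (8 <= m)%nat -> lev m 2 = (m - 2)%nat.
Proof. intros m Hm. unfold lev. dcase; lia. Qed.
Lemma lev_3 : forall m, (8 <= m)%nat -> lev m 3 = 1%nat.
Proof. intros m Hm. unfold lev. dcase; lia. Qed.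

Lemma Kslv_gen : forall m j, (8 <= m)%nat -> (2 <= j <= m - 4)%nat ->
  (2 * j < m - 1 /\ Kslv m j = 2 * j \/ m - 1 <= 2 * j /\ Kslv m j = 2 * m - 3 - 2 * j)%nat.
Proof.
  intros m j Hm Hj. destruct (Nat.lt_ge_cases (2 * j) (m - 1)).
  - left. split; auto. apply Kslv_low; auto.
  - right. split; auto. apply Kslv_high; auto.
Qed.

Lemma K_far : forall m p, (8 <= m)%nat -> (1 <= p)%nat -> (Datatypes.S p < m - 1)%nat ->
  far m (Kslv m (Datatypes.S (lev m p))) (Kslv m (Datatypes.S (lev m (Datatypes.S p)))).
Proof.
  intros m p Hm H1 H2. unfold far.
  destruct (Nat.eq_dec p 1) as [->|].
  { rewrite lev_1, lev_2 by lia. replace (Datatypes.S (m - 3)) with (m - 2)%nat by lia.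
    replace (Datatypes.S (m - 2)) with (m - 1)%nat by lia. rewrite Kslv_m2, Kslv_m1 by lia. lia. }
  destruct (Nat.eq_dec p 2) as [->|].
  { rewrite lev_2, lev_3 by lia. replace (Datatypes.S (m - 2)) with (m - 1)%nat by lia.
    rewrite Kslv_m1, (Kslv_low m 2) by lia. lia. }
  destruct (Nat.eq_dec p 3) as [->|].
  { rewrite lev_3 by lia. replace 4%nat with (2*2)%nat by reflexivity. rewrite lev_even by lia.
    rewrite (Kslv_low m 2), (Kslv_low m 3) by lia. lia. }
  destruct (Nat.Even_or_Odd p) as [[k ->]|[k ->]].
  - rewrite lev_even by lia. replace (Datatypes.S (2*k)) with (2*k+1)%nat by lia.
    rewrite lev_odd by lia. replace (Datatypes.S (m - 2 - k)) with (m - 1 - k)%nat by lia.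
    destruct (Nat.eq_dec k 2) as [->|Hk2].
    + replace (m - 1 - 2)%nat with (m - 3)%nat by lia. rewrite Kslv_m3 by lia.
      destruct (Kslv_gen m 3 ltac:(lia) ltac:(lia)) as [[A B]|[A B]]; rewrite B; lia.
    + rewrite (Kslv_high m (m - 1 - k)) by lia.
      destruct (Kslv_gen m (Datatypes.S k) ltac:(lia) ltac:(lia)) as [[A B]|[A B]]; rewrite B; lia.
  - rewrite lev_odd by lia. replace (Datatypes.S (2*k+1)) with (2*(k+1))%nat by lia.
    rewrite lev_even by lia. replace (Datatypes.S (m - 2 - k)) with (m - 1 - k)%nat by lia.
    destruct (Nat.eq_dec k 2) as [->|Hk2].
    + replace (m - 1 - 2)%nat with (m - 3)%nat by lia. rewrite Kslv_m3 by lia.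
      destruct (Kslv_gen m (Datatypes.S (2 + 1)) ltac:(lia) ltac:(lia)) as [[A B]|[A B]]; rewrite B; lia.
    + rewrite (Kslv_high m (m - 1 - k)) by lia.
      destruct (Kslv_gen m (Datatypes.S (k + 1)) ltac:(lia) ltac:(lia)) as [[A B]|[A B]]; rewrite B; lia.
Qed.

Lemma Kfam_ok : forall m o mg, (8 <= m)%nat ->
  (mg = true -> o 0%nat = true /\ o (m-3)%nat = true) -> (mg = false -> o 0%nat = false) ->
  SD_ok (Kfam m o mg).
Proof.
  intros m o mg Hm Ht Hf. destruct (Kfam_bij m o mg Hm) as [B1 B2].
  split; [simpl; lia|]. split; [exact B1|]. split; [exact B2|].
  split; [simpl; unfold Kslv; dcase; lia|].
  split.
  { intros Hmg. simpl in Hmg. destruct (Ht Hmg) as [O0 O1].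
    rewrite !Kfs by lia. rewrite !Ksg by lia.
    replace (lev m 0) with 0%nat by reflexivity.
    replace (lev m 1) with (m-3)%nat by (unfold lev; dcase; lia).
    split; auto. split; auto. unfold Kslv; dcase; lia. }
  intros p Hp Hp0. simpl in Hp.
  unfold endk, startk. rewrite !Kfs by lia. rewrite !Ksg by lia.
  destruct (Nat.eq_dec p 0) as [->|Hne].
  - destruct mg. { exfalso. apply Hp0; auto. }
    replace (lev m 0) with 0%nat by reflexivity. rewrite (Hf eq_refl).
    replace (lev m 1) with (m-3)%nat by (unfold lev; dcase; lia).
    unfold dist_nat. simpl sm. destruct (o (m-3)%nat); unfold Kslv; dcase; lia.
  - pose proof (K_far m p Hm ltac:(lia) ltac:(lia)) as (F1&F2&F3&F4&F5&F6&F7).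
    unfold dist_nat. simpl sm.
    destruct (o (lev m p)), (o (lev m (Datatypes.S p))); lia.
Qed.

Definition oA (s j : nat) : bool := Nat.leb 1 j && Nat.leb j s.
Definition oB (s m j : nat) : bool := Nat.ltb j (s - 1) || Nat.eqb j (m - 3).

Lemma cnt_oA : forall m s, (s <= m - 2)%nat -> (2 <= m)%nat -> cnt (oA s) 0 (pred m) = s.
Proof.
  intros m s Hs Hm. replace (pred m) with (1 + s + (pred m - 1 - s))%nat by lia.
  rewrite !cnt_split. rewrite (cnt_none (oA s) 0 1), (cnt_all (oA s) (0 + 1) s), (cnt_none (oA s) (0 + 1 + s)).
  - lia.
  - intros i Hi. unfold oA. destruct (Nat.leb_spec 1 i), (Nat.leb_spec i s); simpl; auto; lia.
  - intros i Hi. unfold oA. destruct (Nat.leb_spec 1 i), (Nat.leb_spec i s); simpl; auto; lia.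
  - intros i Hi. unfold oA. destruct (Nat.leb_spec 1 i), (Nat.leb_spec i s); simpl; auto; lia.
Qed.

Lemma cnt_oB : forall m s, (2 <= s <= m - 2)%nat -> (8 <= m)%nat -> cnt (oB s m) 0 (pred m) = s.
Proof.
  intros m s Hs Hm. replace (pred m) with ((s - 1) + (m - 2 - s) + 1 + 1)%nat by lia.
  rewrite (cnt_split _ 0 (s - 1 + (m - 2 - s) + 1) 1), (cnt_split _ 0 (s - 1 + (m - 2 - s)) 1),
    (cnt_split _ 0 (s - 1) (m - 2 - s)). rewrite !Nat.add_0_l.
  rewrite (cnt_all (oB s m) 0 (s-1)), (cnt_none (oB s m) (s-1) (m - 2 - s)),
    (cnt_all (oB s m) (s - 1 + (m - 2 - s)) 1), (cnt_none (oB s m) (s - 1 + (m - 2 - s) + 1) 1).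
  - lia.
  - intros i Hi. unfold oB. destruct (Nat.ltb_spec i (s-1)), (Nat.eqb_spec i (m-3)); simpl; auto; lia.
  - intros i Hi. unfold oB. destruct (Nat.ltb_spec i (s-1)), (Nat.eqb_spec i (m-3)); simpl; auto; lia.
  - intros i Hi. unfold oB. destruct (Nat.ltb_spec i (s-1)), (Nat.eqb_spec i (m-3)); simpl; auto; lia.
  - intros i Hi. unfold oB. destruct (Nat.ltb_spec i (s-1)), (Nat.eqb_spec i (m-3)); simpl; auto; lia.
Qed.

Lemma K_case : forall m o mg c, (8 <= m)%nat ->
  (mg = true -> o 0%nat = true /\ o (m-3)%nat = true) -> (mg = false -> o 0%nat = false) ->
  cnt o 0 (pred m) = c ->
  exists T, in_C (m + 1 - (if mg then 1 else 0)) (c + (if Nat.odd c then 2 else 0) - (if mg then 1 else 0)) T.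
Proof.
  intros m o mg c Hm Ht Hf Hc. pose proof (Kfam_ok m o mg Hm Ht Hf) as HS.
  pose proof (SD_in_C _ HS) as H. pose proof (flipcount_formula _ HS) as F.
  unfold Pp in F. rewrite par_cnt in F. simpl in F, H. rewrite Hc in F.
  unfold off in F, H. simpl in F, H.
  assert (E : flipcount (mkD (Kfam m o mg)) = (c + (if Nat.odd c then 2 else 0) - (if mg then 1 else 0))%nat).
  { destruct mg, (Nat.odd c); lia. }
  rewrite E in H. eauto.
Qed.

Lemma large_cases : forall n f, (9 <= n)%nat -> (1 <= f <= n)%nat -> exists T, in_C n f T.
Proof.
  intros n f Hn Hf.
  destruct (Nat.eq_dec f 1) as [->|H1].
  { destruct (K_case n (oB 2 n) true 2 ltac:(lia)) as [T HT].
    - intros _. unfold oB. split; [reflexivity|]. rewrite Nat.eqb_refl. apply Bool.orb_true_r.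
    - intros; discriminate.
    - apply cnt_oB; lia.
    - exists T. simpl in HT. replace (n + 1 - 1)%nat with n in HT by lia. exact HT. }
  destruct (Nat.Even_or_Odd f) as [[k Hk]|[k Hk]].
  -
    destruct (Nat.le_gt_cases f (n - 3)).
    + destruct (K_case (n - 1) (oA f) false f ltac:(lia)) as [T HT].
      * intros; discriminate.
      * intros _. reflexivity.
      * apply cnt_oA; lia.
      * assert (Nat.odd f = false) by (subst f; rewrite Nat.odd_mul; reflexivity).
        rewrite H0 in HT. exists T. replace n with (n - 1 + 1 - 0)%nat by lia.
        replace f with (f + 0 - 0)%nat by lia. exact HT.
    + destruct (Nat.le_gt_cases f (n - 1)).
      * destruct (K_case n (oB (f - 1) n) true (f - 1) ltac:(lia)) as [T HT].
        -- intros _. unfold oB. split.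
           ++ destruct (Nat.ltb_spec 0 (f - 1 - 1)); [reflexivity|lia].
           ++ rewrite Nat.eqb_refl. apply Bool.orb_true_r.
        -- intros; discriminate.
        -- apply cnt_oB; lia.
        -- assert (Nat.odd (f - 1) = true).
           { replace (f - 1)%nat with (Datatypes.S (2 * (k - 1))) by lia. rewrite Nat.odd_succ, Nat.even_mul. reflexivity. }
           rewrite H2 in HT. exists T. replace n with (n + 1 - 1)%nat by lia.
           replace f with (f - 1 + 2 - 1)%nat by lia. exact HT.
      * assert (Hfn : f = n) by lia. rewrite Hfn. rewrite Hfn in Hk.
        destruct (K_case n (fun _ => true) true (n - 1) ltac:(lia)) as [T HT].
        -- intros _. auto.
        -- intros; discriminate.
        -- replace (n - 1)%nat with (pred n) by lia. apply cnt_all. intros; reflexivity.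
        -- assert (Nat.odd (n - 1) = true).
           { replace (n - 1)%nat with (Datatypes.S (2 * (k - 1))) by lia. rewrite Nat.odd_succ, Nat.even_mul. reflexivity. }
           rewrite H2 in HT. exists T. replace n with (n + 1 - 1)%nat at 1 by lia.
           replace n with (n - 1 + 2 - 1)%nat at 2 by lia. exact HT.
  -
    destruct (Nat.le_gt_cases f (n - 1)).
    + destruct (K_case (n - 1) (oA (f - 2)) false (f - 2) ltac:(lia)) as [T HT].
      * intros; discriminate.
      * intros _. reflexivity.
      * apply cnt_oA; lia.
      * assert (Nat.odd (f - 2) = true).
        { replace (f - 2)%nat with (Datatypes.S (2 * (k - 1))) by lia. rewrite Nat.odd_succ, Nat.even_mul. reflexivity. }
        rewrite H0 in HT. exists T. replace n with (n - 1 + 1 - 0)%nat by lia.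
        replace f with (f - 2 + 2 - 0)%nat by lia. exact HT.
    + assert (Hfn : f = n) by lia. rewrite Hfn. rewrite Hfn in Hk.
      destruct (Ifam_case (n - 1) ltac:(lia)) as [T HT].
      * replace (n - 1)%nat with (2 * k)%nat by lia. apply Nat.even_mul.
      * exists T. replace n with (n - 1 + 1)%nat by lia. exact HT.
Qed.

Theorem theorem9p1 : forall n f : nat, (4 <= n)%nat -> (1 <= f <= n)%nat ->
  exists T : R -> R, in_C n f T.
Proof.
  intros n f Hn Hf.
  destruct (Nat.le_gt_cases n 8).
  - apply small_cases; lia.
  - apply large_cases; lia.
Qed.
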